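(* There exists an $8$-rep-tile $A\subset\mathbb{R}^3$ which has a hole in the following sense: $A$ is homeomorphic to a solid torus $D^2\times S^1$, and its interior is connected and homeomorphic to an open solid torus. More concretely, $A$ can be chosen as a union of four rectangular boxes, each congruent to $[0,4]\times[0,2]\times[0,1]$, with pairwise disjoint interiors, such that $A$ together with a copy of $A$ rotated by $180^\circ$ forms a rectangular box of size $8\times 4\times 2$. Moreover, eight copies of $A$ assemble to $2A$.
   Context: A closed bounded set $A\subset\mathbb{R}^d$ with non-empty interior is called an $m$-rep-tile if there are sets $A_1,\dots,A_m$, each congruent to $A$, such that any two different $A_j,A_k$ have no common interior points and the union $A_1\cup\dots\cup A_m$ is geometrically similar to $A$. Two sets are congruent if one is the image of the other under an isometry of $\mathbb{R}^d$. *)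

(* Defs.v *)
From Stdlib Require Import Reals Lra.
Open Scope R_scope.

Record P3 := mkP3 { p3x : R; p3y : R; p3z : R }.
Record P4 := mkP4 { p4a : R; p4b : R; p4c : R; p4d : R }.

Definition dist3 (p q : P3) : R :=
  sqrt ((p3x p - p3x q)^2 + (p3y p - p3y q)^2 + (p3z p - p3z q)^2).
Definition dist4 (p q : P4) : R :=
  sqrt ((p4a p - p4a q)^2 + (p4b p - p4b q)^2 + (p4c p - p4c q)^2
        + (p4d p - p4d q)^2).

Definition set3 := P3 -> Prop.
Definition set4 := P4 -> Prop.

Definition set_eq3 (A B : set3) : Prop := forall p, A p <-> B p.

Definition image3 (f : P3 -> P3) (A : set3) : set3 :=
  fun q => exists p, A p /\ q = f p.

Definition ball3 (c : P3) (r : R) : set3 := fun p => dist3 c p < r.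
Definition open3 (U : set3) : Prop :=
  forall p, U p -> exists r, 0 < r /\ forall q, ball3 p r q -> U q.
Definition closed3 (A : set3) : Prop := open3 (fun p => ~ A p).
Definition bounded3 (A : set3) : Prop :=
  exists M, forall p, A p -> dist3 (mkP3 0 0 0) p <= M.
Definition interior3 (A : set3) : set3 :=
  fun p => exists r, 0 < r /\ forall q, ball3 p r q -> A q.

Definition connected3 (S : set3) : Prop :=
  forall U V : set3, open3 U -> open3 V ->
    (forall p, S p -> U p \/ V p) ->
    (forall p, S p -> U p -> V p -> False) ->
    (exists p, S p /\ U p) -> (exists p, S p /\ V p) -> False.

Definition isometry3 (f : P3 -> P3) : Prop :=
  forall p q, dist3 (f p) (f q) = dist3 p q.
Definition congruent3 (A B : set3) : Prop :=
  exists f, isometry3 f /\ set_eq3 B (image3 f A).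
Definition similarity3 (f : P3 -> P3) : Prop :=
  exists r, 0 < r /\ forall p q, dist3 (f p) (f q) = r * dist3 p q.
Definition similar3 (A B : set3) : Prop :=
  exists f, similarity3 f /\ set_eq3 B (image3 f A).

Definition rep_tile (m : nat) (A : set3) : Prop :=
  closed3 A /\ bounded3 A /\ (exists p, interior3 A p) /\
  exists Ai : nat -> set3,
    (forall j, (j < m)%nat -> congruent3 A (Ai j)) /\
    (forall j k, (j < m)%nat -> (k < m)%nat -> j <> k ->
        forall p, interior3 (Ai j) p -> interior3 (Ai k) p -> False) /\
    similar3 A (fun p => exists j, (j < m)%nat /\ Ai j p).

Definition homeomorphic34 (S : set3) (T : set4) : Prop :=
  exists (f : P3 -> P4) (g : P4 -> P3),
    (forall p, S p -> T (f p)) /\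
    (forall q, T q -> S (g q)) /\
    (forall p, S p -> g (f p) = p) /\
    (forall q, T q -> f (g q) = q) /\
    (forall p, S p -> forall eps, 0 < eps -> exists delta, 0 < delta /\
        forall p', S p' -> dist3 p p' < delta -> dist4 (f p) (f p') < eps) /\
    (forall q, T q -> forall eps, 0 < eps -> exists delta, 0 < delta /\
        forall q', T q' -> dist4 q q' < delta -> dist3 (g q) (g q') < eps).

(* solid torus D^2 x S^1 and open solid torus (open disc) x S^1,
   realized in R^2 x R^2 = R^4 *)
Definition solid_torus : set4 :=
  fun q => (p4a q)^2 + (p4b q)^2 <= 1 /\ (p4c q)^2 + (p4d q)^2 = 1.
Definition open_solid_torus : set4 :=
  fun q => (p4a q)^2 + (p4b q)^2 < 1 /\ (p4c q)^2 + (p4d q)^2 = 1.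

Definition box (a b c : R) : set3 :=
  fun p => 0 <= p3x p <= a /\ 0 <= p3y p <= b /\ 0 <= p3z p <= c.

(* rotation by 180 degrees about the line through c with unit direction u *)
Definition half_turn (c u : P3) (p : P3) : P3 :=
  let dx := p3x p - p3x c in
  let dy := p3y p - p3y c in
  let dz := p3z p - p3z c in
  let t := dx * p3x u + dy * p3y u + dz * p3z u in
  mkP3 (p3x c + 2 * t * p3x u - dx)
       (p3y c + 2 * t * p3y u - dy)
       (p3z c + 2 * t * p3z u - dz).
Definition unit3 (u : P3) : Prop := (p3x u)^2 + (p3y u)^2 + (p3z u)^2 = 1.

Definition scale3 (k : R) (A : set3) : set3 :=
  fun p => exists q, A q /\ p = mkP3 (k * p3x q) (k * p3y q) (k * p3z q).

(* Main.v *)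
Require Import Defs.
From Stdlib Require Import Reals Lra Psatz Classical List Lia.
From Coquelicot Require Import Coquelicot.
Open Scope R_scope.

Definition dR (a b : R) : R := Rabs (b - a).
Definition contg {X Y : Type} (dX : X -> X -> R) (dY : Y -> Y -> R) (f : X -> Y) (p : X) : Prop :=
  forall eps, 0 < eps -> exists del, 0 < del /\ forall q, dX p q < del -> dY (f p) (f q) < eps.

Lemma contg_comp {X Y Z : Type} (dX : X -> X -> R) (dY : Y -> Y -> R) (dZ : Z -> Z -> R)
  (f : X -> Y) (g : Y -> Z) p :
  contg dX dY f p -> contg dY dZ g (f p) -> contg dX dZ (fun q => g (f q)) p.
Proof.
  intros Hf Hg eps He. destruct (Hg eps He) as [d1 [Hd1 H1]].
  destruct (Hf d1 Hd1) as [d2 [Hd2 H2]]. exists d2; split; auto.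
Qed.

Section Cont.
Context {X : Type} (dX : X -> X -> R).
Notation cont := (contg dX dR).

Lemma cont_ext (f g : X -> R) p : (forall q, f q = g q) -> cont f p -> cont g p.
Proof. intros E H eps He. destruct (H eps He) as [d [Hd H1]]. exists d; split; auto.
  intros q Hq. unfold dR. rewrite <- !E. apply H1; auto. Qed.

Lemma cont_const c p : cont (fun _ => c) p.
Proof. intros eps He. exists 1; split; [lra|]. intros q _. unfold dR.
  replace (c - c) with 0 by ring. rewrite Rabs_R0. lra. Qed.

Lemma cont_plus f g p : cont f p -> cont g p -> cont (fun q => f q + g q) p.
Proof. intros Hf Hg eps He.
  destruct (Hf (eps/2)) as [d1 [Hd1 H1]]; [lra|].
  destruct (Hg (eps/2)) as [d2 [Hd2 H2]]; [lra|].
  exists (Rmin d1 d2); split; [apply Rmin_pos; auto|]. intros q Hq.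
  specialize (H1 q (Rlt_le_trans _ _ _ Hq (Rmin_l _ _))).
  specialize (H2 q (Rlt_le_trans _ _ _ Hq (Rmin_r _ _))). unfold dR in *.
  replace (f q + g q - (f p + g p)) with ((f q - f p) + (g q - g p)) by ring.
  eapply Rle_lt_trans; [apply Rabs_triang|]. lra. Qed.

Lemma cont_opp f p : cont f p -> cont (fun q => - f q) p.
Proof. intros Hf eps He. destruct (Hf eps He) as [d [Hd H]]. exists d; split; auto.
  intros q Hq. unfold dR in *. replace (- f q - - f p) with (-(f q - f p)) by ring.
  rewrite Rabs_Ropp. auto. Qed.

Lemma cont_minus f g p : cont f p -> cont g p -> cont (fun q => f q - g q) p.
Proof. intros. apply (cont_ext (fun q => f q + - g q)). intro; ring.
  apply cont_plus; auto. apply cont_opp; auto. Qed.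

Lemma cont_abs f p : cont f p -> cont (fun q => Rabs (f q)) p.
Proof. intros Hf eps He. destruct (Hf eps He) as [d [Hd H]]. exists d; split; auto.
  intros q Hq. unfold dR in *. eapply Rle_lt_trans; [apply Rabs_triang_inv2|]. auto. Qed.

Lemma Rmax_lip a b c d : Rabs (Rmax a b - Rmax c d) <= Rmax (Rabs (a - c)) (Rabs (b - d)).
Proof. unfold Rmax. destruct (Rle_dec a b); destruct (Rle_dec c d). all: destruct (Rle_dec (Rabs (a-c)) (Rabs (b-d))).
 all: unfold Rabs in *; repeat destruct Rcase_abs; lra. Qed.

Lemma cont_max f g p : cont f p -> cont g p -> cont (fun q => Rmax (f q) (g q)) p.
Proof. intros Hf Hg eps He.
  destruct (Hf eps He) as [d1 [Hd1 H1]]. destruct (Hg eps He) as [d2 [Hd2 H2]].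
  exists (Rmin d1 d2); split; [apply Rmin_pos; auto|]. intros q Hq.
  specialize (H1 q (Rlt_le_trans _ _ _ Hq (Rmin_l _ _))).
  specialize (H2 q (Rlt_le_trans _ _ _ Hq (Rmin_r _ _))). unfold dR in *.
  eapply Rle_lt_trans; [apply Rmax_lip|]. apply Rmax_lub_lt; auto. Qed.

Lemma cont_unary (h : R -> R) f p : cont f p -> continuity_pt h (f p) -> cont (fun q => h (f q)) p.
Proof. intros Hf Hh eps He.
  destruct (Hh eps He) as [a [Ha H]]. destruct (Hf a Ha) as [d [Hd H1]].
  exists d; split; auto. intros q Hq. specialize (H1 q Hq). unfold dR in *.
  destruct (Req_dec (f q) (f p)) as [E|E].
  - rewrite E. replace (h (f p) - h (f p)) with 0 by ring. rewrite Rabs_R0; auto.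
  - assert (HH := H (f q)). simpl in HH. unfold R_dist in HH. apply HH. split.
    + split; [exact I| auto].
    + auto.
Qed.

Lemma cont_unaryC (h : R -> R) f p : cont f p -> continuous h (f p) -> cont (fun q => h (f q)) p.
Proof. intros Hf Hh. apply cont_unary; auto. apply continuity_pt_filterlim; auto. Qed.

Lemma cont_sq f p : cont f p -> cont (fun q => f q * f q) p.
Proof. intros Hf. apply (cont_unary (fun x => x * x)); auto.
  apply continuity_pt_mult; apply continuity_pt_id. Qed.

Lemma cont_scal c f p : cont f p -> cont (fun q => c * f q) p.
Proof. intros Hf. apply (cont_unary (fun x => c * x)); auto.
  apply continuity_pt_mult; [apply continuity_pt_const; intros ? ?; auto | apply continuity_pt_id]. Qed.

Lemma cont_mult f g p : cont f p -> cont g p -> cont (fun q => f q * g q) p.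
Proof. intros Hf Hg.
  apply (cont_ext (fun q => /4 * ((f q + g q) * (f q + g q)) - /4 * ((f q - g q) * (f q - g q)))).
  intro; field. apply cont_minus; apply cont_scal; apply cont_sq.
  apply cont_plus; auto. apply cont_minus; auto. Qed.

Lemma cont_inv f p : cont f p -> f p <> 0 -> cont (fun q => / f q) p.
Proof. intros Hf Hn. apply (cont_unary (fun x => / x)); auto.
  apply (continuity_pt_inv (fun x => x)); auto. apply continuity_pt_id. Qed.

Lemma cont_div f g p : cont f p -> cont g p -> g p <> 0 -> cont (fun q => f q / g q) p.
Proof. intros. apply cont_mult; auto. apply cont_inv; auto. Qed.

Lemma cont_sqrt f p : cont f p -> cont (fun q => sqrt (f q)) p.
Proof. intros. apply cont_unaryC; auto. apply continuous_sqrt. Qed.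

Lemma cont_exp f p : cont f p -> cont (fun q => exp (f q)) p.
Proof. intros. apply cont_unaryC; auto. apply continuous_exp. Qed.

Lemma cont_ln f p : cont f p -> 0 < f p -> cont (fun q => ln (f q)) p.
Proof. intros. apply cont_unaryC; auto. apply continuous_ln; auto. Qed.

End Cont.

Lemma sqrt_ge_abs a s : 0 <= s - a^2 -> Rabs a <= sqrt s.
Proof. intro H. rewrite <- sqrt_Rsqr_abs. apply sqrt_le_1_alt. unfold Rsqr. lra. Qed.

Lemma sqrt_le_sum s t : 0 <= t -> s <= t^2 -> sqrt s <= t.
Proof. intros Ht H. rewrite <- (sqrt_pow2 t Ht). apply sqrt_le_1_alt. auto. Qed.

Lemma c3x p q : Rabs (p3x q - p3x p) <= dist3 p q.
Proof. unfold dist3. apply sqrt_ge_abs. pose proof (pow2_ge_0 (p3y p - p3y q)). pose proof (pow2_ge_0 (p3z p - p3z q)). lra. Qed.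
Lemma c3y p q : Rabs (p3y q - p3y p) <= dist3 p q.
Proof. unfold dist3. apply sqrt_ge_abs. pose proof (pow2_ge_0 (p3x p - p3x q)). pose proof (pow2_ge_0 (p3z p - p3z q)). lra. Qed.
Lemma c3z p q : Rabs (p3z q - p3z p) <= dist3 p q.
Proof. unfold dist3. apply sqrt_ge_abs. pose proof (pow2_ge_0 (p3x p - p3x q)). pose proof (pow2_ge_0 (p3y p - p3y q)). lra. Qed.
Lemma c4a p q : Rabs (p4a q - p4a p) <= dist4 p q.
Proof. unfold dist4. apply sqrt_ge_abs. pose proof (pow2_ge_0 (p4b p - p4b q)). pose proof (pow2_ge_0 (p4c p - p4c q)). pose proof (pow2_ge_0 (p4d p - p4d q)). lra. Qed.
Lemma c4b p q : Rabs (p4b q - p4b p) <= dist4 p q.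
Proof. unfold dist4. apply sqrt_ge_abs. pose proof (pow2_ge_0 (p4a p - p4a q)). pose proof (pow2_ge_0 (p4c p - p4c q)). pose proof (pow2_ge_0 (p4d p - p4d q)). lra. Qed.
Lemma c4c p q : Rabs (p4c q - p4c p) <= dist4 p q.
Proof. unfold dist4. apply sqrt_ge_abs. pose proof (pow2_ge_0 (p4a p - p4a q)). pose proof (pow2_ge_0 (p4b p - p4b q)). pose proof (pow2_ge_0 (p4d p - p4d q)). lra. Qed.
Lemma c4d p q : Rabs (p4d q - p4d p) <= dist4 p q.
Proof. unfold dist4. apply sqrt_ge_abs. pose proof (pow2_ge_0 (p4a p - p4a q)). pose proof (pow2_ge_0 (p4b p - p4b q)). pose proof (pow2_ge_0 (p4c p - p4c q)). lra. Qed.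

Lemma dist3_le p q : dist3 p q <= Rabs (p3x q - p3x p) + Rabs (p3y q - p3y p) + Rabs (p3z q - p3z p).
Proof. unfold dist3. apply sqrt_le_sum.
  - repeat apply Rplus_le_le_0_compat; apply Rabs_pos.
  - rewrite <- (Rabs_Ropp (p3x q - _)), <- (Rabs_Ropp (p3y q - _)), <- (Rabs_Ropp (p3z q - _)).
    replace (- (p3x q - p3x p)) with (p3x p - p3x q) by ring.
    replace (- (p3y q - p3y p)) with (p3y p - p3y q) by ring.
    replace (- (p3z q - p3z p)) with (p3z p - p3z q) by ring.
    set (a := p3x p - p3x q). set (b := p3y p - p3y q). set (c := p3z p - p3z q).
    assert (Rabs a ^ 2 = a ^ 2) by (rewrite RPow_abs; apply Rabs_right; apply Rle_ge, pow2_ge_0).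
    assert (Rabs b ^ 2 = b ^ 2) by (rewrite RPow_abs; apply Rabs_right; apply Rle_ge, pow2_ge_0).
    assert (Rabs c ^ 2 = c ^ 2) by (rewrite RPow_abs; apply Rabs_right; apply Rle_ge, pow2_ge_0).
    pose proof (Rabs_pos a); pose proof (Rabs_pos b); pose proof (Rabs_pos c).
    pose proof (Rmult_le_pos _ _ H2 H3). pose proof (Rmult_le_pos _ _ H2 H4). pose proof (Rmult_le_pos _ _ H3 H4). lra.
Qed.

Lemma dist4_le p q : dist4 p q <= Rabs (p4a q - p4a p) + Rabs (p4b q - p4b p) + Rabs (p4c q - p4c p) + Rabs (p4d q - p4d p).
Proof. unfold dist4. apply sqrt_le_sum.
  - repeat apply Rplus_le_le_0_compat; apply Rabs_pos.
  - rewrite <- (Rabs_Ropp (p4a q - _)), <- (Rabs_Ropp (p4b q - _)), <- (Rabs_Ropp (p4c q - _)), <- (Rabs_Ropp (p4d q - _)).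
    replace (- (p4a q - p4a p)) with (p4a p - p4a q) by ring.
    replace (- (p4b q - p4b p)) with (p4b p - p4b q) by ring.
    replace (- (p4c q - p4c p)) with (p4c p - p4c q) by ring.
    replace (- (p4d q - p4d p)) with (p4d p - p4d q) by ring.
    set (a := p4a p - p4a q). set (b := p4b p - p4b q). set (c := p4c p - p4c q). set (d := p4d p - p4d q).
    assert (Rabs a ^ 2 = a ^ 2) by (rewrite RPow_abs; apply Rabs_right; apply Rle_ge, pow2_ge_0).
    assert (Rabs b ^ 2 = b ^ 2) by (rewrite RPow_abs; apply Rabs_right; apply Rle_ge, pow2_ge_0).
    assert (Rabs c ^ 2 = c ^ 2) by (rewrite RPow_abs; apply Rabs_right; apply Rle_ge, pow2_ge_0).
    assert (Rabs d ^ 2 = d ^ 2) by (rewrite RPow_abs; apply Rabs_right; apply Rle_ge, pow2_ge_0).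
    pose proof (Rabs_pos a) as A1; pose proof (Rabs_pos b) as A2; pose proof (Rabs_pos c) as A3; pose proof (Rabs_pos d) as A4.
    pose proof (Rmult_le_pos _ _ A1 A2). pose proof (Rmult_le_pos _ _ A1 A3). pose proof (Rmult_le_pos _ _ A1 A4). pose proof (Rmult_le_pos _ _ A2 A3). pose proof (Rmult_le_pos _ _ A2 A4). pose proof (Rmult_le_pos _ _ A3 A4). lra.
Qed.

Ltac triv_coord H := intros eps He; exists eps; split; [exact He|]; intros q Hq; unfold dR;
  eapply Rle_lt_trans; [apply H|exact Hq].

Lemma cont_x p : contg dist3 dR p3x p. Proof. triv_coord c3x. Qed.
Lemma cont_y p : contg dist3 dR p3y p. Proof. triv_coord c3y. Qed.
Lemma cont_z p : contg dist3 dR p3z p. Proof. triv_coord c3z. Qed.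
Lemma cont_a p : contg dist4 dR p4a p. Proof. triv_coord c4a. Qed.
Lemma cont_b p : contg dist4 dR p4b p. Proof. triv_coord c4b. Qed.
Lemma cont_c p : contg dist4 dR p4c p. Proof. triv_coord c4c. Qed.
Lemma cont_d p : contg dist4 dR p4d p. Proof. triv_coord c4d. Qed.
Lemma cont_idR p : contg dR dR (fun t => t) p. Proof. intros eps He; exists eps; split; auto. Qed.

Section V.
Context {X : Type} (dX : X -> X -> R).
Lemma contV3 fx fy fz p : contg dX dR fx p -> contg dX dR fy p -> contg dX dR fz p ->
  contg dX dist3 (fun q => mkP3 (fx q) (fy q) (fz q)) p.
Proof. intros Hx Hy Hz eps He.
  destruct (Hx (eps/3)) as [d1 [Hd1 H1]]; [lra|].
  destruct (Hy (eps/3)) as [d2 [Hd2 H2]]; [lra|].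
  destruct (Hz (eps/3)) as [d3 [Hd3 H3]]; [lra|].
  exists (Rmin d1 (Rmin d2 d3)); split. repeat apply Rmin_pos; auto.
  intros q Hq. eapply Rle_lt_trans; [apply dist3_le|]. simpl.
  assert (dX p q < d1) by (eapply Rlt_le_trans; [exact Hq| apply Rmin_l]).
  assert (dX p q < d2) by (eapply Rlt_le_trans; [exact Hq| eapply Rle_trans; [apply Rmin_r|apply Rmin_l]]).
  assert (dX p q < d3) by (eapply Rlt_le_trans; [exact Hq| eapply Rle_trans; [apply Rmin_r|apply Rmin_r]]).
  specialize (H1 q H). specialize (H2 q H0). specialize (H3 q H4). unfold dR in *. lra.
Qed.
Lemma contV4 fa fb fc fd p : contg dX dR fa p -> contg dX dR fb p -> contg dX dR fc p -> contg dX dR fd p ->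
  contg dX dist4 (fun q => mkP4 (fa q) (fb q) (fc q) (fd q)) p.
Proof. intros Ha Hb Hc Hd eps He.
  destruct (Ha (eps/4)) as [d1 [Hd1 H1]]; [lra|].
  destruct (Hb (eps/4)) as [d2 [Hd2 H2]]; [lra|].
  destruct (Hc (eps/4)) as [d3 [Hd3 H3]]; [lra|].
  destruct (Hd (eps/4)) as [d4 [Hd4 H4]]; [lra|].
  exists (Rmin (Rmin d1 d2) (Rmin d3 d4)); split. repeat apply Rmin_pos; auto.
  intros q Hq. eapply Rle_lt_trans; [apply dist4_le|]. simpl.
  pose proof (Rmin_l (Rmin d1 d2) (Rmin d3 d4)). pose proof (Rmin_r (Rmin d1 d2) (Rmin d3 d4)).
  pose proof (Rmin_l d1 d2). pose proof (Rmin_r d1 d2). pose proof (Rmin_l d3 d4). pose proof (Rmin_r d3 d4).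
  specialize (H1 q ltac:(lra)). specialize (H2 q ltac:(lra)). specialize (H3 q ltac:(lra)). specialize (H4 q ltac:(lra)).
  unfold dR in *. lra.
Qed.
End V.

Definition rk (N1 N2 : R -> R -> R) u w := N1 u w / N2 u w.
Definition ru (N1 N2 : R -> R -> R) u w := u * rk N1 N2 u w.
Definition rw (N1 N2 : R -> R -> R) u w := w * rk N1 N2 u w.

Section Ratio.
Variables N1 N2 : R -> R -> R.
Hypothesis hom1 : forall k u w, 0 <= k -> N1 (k*u) (k*w) = k * N1 u w.
Hypothesis hom2 : forall k u w, 0 <= k -> N2 (k*u) (k*w) = k * N2 u w.
Hypothesis pos1 : forall u w, u <> 0 \/ w <> 0 -> 0 < N1 u w.
Hypothesis pos2 : forall u w, u <> 0 \/ w <> 0 -> 0 < N2 u w.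
Variable C : R.
Hypothesis bnd : forall u w, N1 u w <= C * N2 u w.
Hypothesis cont1 : forall (X : Type) (dX : X -> X -> R) U W p,
  contg dX dR U p -> contg dX dR W p -> contg dX dR (fun q => N1 (U q) (W q)) p.
Hypothesis cont2 : forall (X : Type) (dX : X -> X -> R) U W p,
  contg dX dR U p -> contg dX dR W p -> contg dX dR (fun q => N2 (U q) (W q)) p.

Lemma N1_00 : N1 0 0 = 0.
Proof. pose proof (hom1 0 0 0 (Rle_refl 0)). rewrite !Rmult_0_l in H. exact H. Qed.
Lemma N2_00 : N2 0 0 = 0.
Proof. pose proof (hom2 0 0 0 (Rle_refl 0)). rewrite !Rmult_0_l in H. exact H. Qed.

Lemma nz_dec u w : (u = 0 /\ w = 0) \/ (u <> 0 \/ w <> 0).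
Proof. destruct (Req_dec u 0); destruct (Req_dec w 0); tauto. Qed.

Lemma rk_spec u w : (u = 0 /\ w = 0 /\ ru N1 N2 u w = 0 /\ rw N1 N2 u w = 0) \/
  ((u <> 0 \/ w <> 0) /\ 0 < rk N1 N2 u w /\ 0 < N1 u w /\ 0 < N2 u w).
Proof. destruct (nz_dec u w) as [[-> ->]|H].
  - left. unfold ru, rw. repeat split; ring.
  - right. repeat split; auto. unfold rk. apply Rdiv_lt_0_compat; auto.
Qed.

Lemma N2_img u w : N2 (ru N1 N2 u w) (rw N1 N2 u w) = N1 u w.
Proof. destruct (rk_spec u w) as [[-> [-> [-> ->]]]|[H [Hk [H1 H2]]]].
  - rewrite N1_00, N2_00. auto.
  - unfold ru, rw. rewrite (Rmult_comm u), (Rmult_comm w), hom2 by lra.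
    unfold rk. field. lra.
Qed.

Lemma N1_img u w : N1 (ru N1 N2 u w) (rw N1 N2 u w) = rk N1 N2 u w * N1 u w.
Proof. destruct (rk_spec u w) as [[-> [-> [-> ->]]]|[H [Hk [H1 H2]]]].
  - rewrite N1_00. ring.
  - unfold ru, rw. rewrite (Rmult_comm u), (Rmult_comm w), hom1 by lra. auto.
Qed.

Lemma r_inv u w : ru N2 N1 (ru N1 N2 u w) (rw N1 N2 u w) = u /\ rw N2 N1 (ru N1 N2 u w) (rw N1 N2 u w) = w.
Proof. destruct (rk_spec u w) as [[-> [-> [-> ->]]]|[H [Hk [H1 H2]]]].
  - unfold ru, rw. split; ring.
  - assert (E : rk N2 N1 (ru N1 N2 u w) (rw N1 N2 u w) = / rk N1 N2 u w).
    { unfold rk at 1. rewrite N2_img, N1_img. field. split; lra. }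
    unfold ru at 1, rw at 2. rewrite E. unfold ru, rw. split; field; lra.
Qed.

Lemma r_id u w : N1 u w = N2 u w -> ru N1 N2 u w = u /\ rw N1 N2 u w = w.
Proof. intro E. destruct (rk_spec u w) as [[-> [-> [-> ->]]]|[H [Hk [H1 H2]]]].
  - auto.
  - unfold ru, rw, rk. rewrite E. split; field; lra.
Qed.

Lemma r_scal u w : exists k, 0 <= k /\ ru N1 N2 u w = k * u /\ rw N1 N2 u w = k * w /\
  ((u <> 0 \/ w <> 0) -> 0 < k).
Proof. destruct (rk_spec u w) as [[-> [-> [-> ->]]]|[H [Hk [H1 H2]]]].
  - exists 0. split; [lra|]. split; [ring|]. split; [ring|]. intro HH; destruct HH as [HH|HH]; lra.
  - exists (rk N1 N2 u w). unfold ru, rw. repeat split; try ring; lra.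
Qed.

Section CC.
Context {X : Type} (dX : X -> X -> R).


Lemma ru_bound u w : Rabs (ru N1 N2 u w) <= Rabs C * Rabs u.
Proof. destruct (rk_spec u w) as [[-> [-> [E3 E4]]]|[H [Hk [H1 H2]]]].
  - rewrite E3, !Rabs_R0. pose proof (Rabs_pos C). lra.
  - unfold ru. rewrite Rabs_mult, (Rmult_comm (Rabs C)). apply Rmult_le_compat_l. apply Rabs_pos.
    rewrite Rabs_right by lra. unfold rk. apply Rle_trans with C.
    + apply (Rmult_le_reg_r (N2 u w)); auto. unfold Rdiv. rewrite Rmult_assoc, Rinv_l by lra.
      rewrite Rmult_1_r. apply bnd.
    + apply Rle_abs.
Qed.
Lemma rw_bound u w : Rabs (rw N1 N2 u w) <= Rabs C * Rabs w.
Proof. destruct (rk_spec u w) as [[-> [-> [E3 E4]]]|[H [Hk [H1 H2]]]].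
  - rewrite E4, !Rabs_R0. pose proof (Rabs_pos C). lra.
  - unfold rw. rewrite Rabs_mult, (Rmult_comm (Rabs C)). apply Rmult_le_compat_l. apply Rabs_pos.
    rewrite Rabs_right by lra. unfold rk. apply Rle_trans with C.
    + apply (Rmult_le_reg_r (N2 u w)); auto. unfold Rdiv. rewrite Rmult_assoc, Rinv_l by lra.
      rewrite Rmult_1_r. apply bnd.
    + apply Rle_abs.
Qed.

Lemma cont_at0 (F U : X -> R) p : contg dX dR U p -> U p = 0 -> F p = 0 ->
  (forall q, Rabs (F q) <= Rabs C * Rabs (U q)) -> contg dX dR F p.
Proof. intros HU HU0 HF0 Hb eps He.
  destruct (HU (eps / (Rabs C + 1))) as [d [Hd H]].
  { apply Rdiv_lt_0_compat; auto. pose proof (Rabs_pos C); lra. }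
  exists d; split; auto. intros q Hq. specialize (H q Hq). unfold dR in *.
  rewrite HF0, Rminus_0_r. rewrite HU0, Rminus_0_r in H.
  eapply Rle_lt_trans; [apply Hb|]. pose proof (Rabs_pos C). pose proof (Rabs_pos (U q)).
  apply Rle_lt_trans with ((Rabs C + 1) * Rabs (U q)). nra.
  apply (Rmult_lt_reg_r (/ (Rabs C + 1))). apply Rinv_0_lt_compat; lra.
  replace ((Rabs C + 1) * Rabs (U q) * / (Rabs C + 1)) with (Rabs (U q)) by (field; lra).
  exact H.
Qed.

Lemma cont_ru (U W : X -> R) p : contg dX dR U p -> contg dX dR W p ->
  contg dX dR (fun q => ru N1 N2 (U q) (W q)) p.
Proof. intros HU HW. destruct (nz_dec (U p) (W p)) as [[E1 E2]|H].
  - apply (cont_at0 _ U); auto. unfold ru. rewrite E1; ring. intro; apply ru_bound.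
  - unfold ru, rk. apply cont_mult; auto. apply cont_div; auto. pose proof (pos2 _ _ H); lra.
Qed.
Lemma cont_rw (U W : X -> R) p : contg dX dR U p -> contg dX dR W p ->
  contg dX dR (fun q => rw N1 N2 (U q) (W q)) p.
Proof. intros HU HW. destruct (nz_dec (U p) (W p)) as [[E1 E2]|H].
  - apply (cont_at0 _ W); auto. unfold rw. rewrite E2; ring. intro; apply rw_bound.
  - unfold rw, rk. apply cont_mult; auto. apply cont_div; auto. pose proof (pos2 _ _ H); lra.
Qed.
End CC.
End Ratio.

Lemma Rmax_scal k x y : 0 <= k -> Rmax (k * x) (k * y) = k * Rmax x y.
Proof. intro Hk. unfold Rmax. destruct (Rle_dec x y); destruct (Rle_dec (k*x) (k*y)); auto.
  - destruct (Req_dec k 0) as [->|Hk']. ring. exfalso. apply n. apply Rmult_le_compat_l; auto.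
  - destruct (Req_dec k 0) as [->|Hk']. ring. exfalso. apply n. apply Rmult_le_reg_l with k; lra.
Qed.

Definition gg (a b u w : R) : R := Rmax (Rabs u / a) (Rabs w / b).

Lemma gg_hom a b k u w : 0 <= k -> gg a b (k*u) (k*w) = k * gg a b u w.
Proof. intro Hk. unfold gg. rewrite !Rabs_mult, (Rabs_right k) by lra.
  unfold Rdiv. rewrite !Rmult_assoc. apply Rmax_scal; auto. Qed.

Lemma gg_pos a b u w : 0 < a -> 0 < b -> (u <> 0 \/ w <> 0) -> 0 < gg a b u w.
Proof. intros Ha Hb H. unfold gg. destruct H as [H|H].
  - apply Rlt_le_trans with (Rabs u / a). apply Rdiv_lt_0_compat; auto. apply Rabs_pos_lt; auto. apply Rmax_l.
  - apply Rlt_le_trans with (Rabs w / b). apply Rdiv_lt_0_compat; auto. apply Rabs_pos_lt; auto. apply Rmax_r.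
Qed.

Lemma gg_nn a b u w : 0 < a -> 0 < b -> 0 <= gg a b u w.
Proof. intros. unfold gg. apply Rle_trans with (Rabs u / a). apply Rmult_le_pos. apply Rabs_pos.
  left; apply Rinv_0_lt_compat; auto. apply Rmax_l. Qed.

Lemma gg_bnd a b1 b2 u w : 0 < a -> 0 < b1 -> 0 < b2 -> gg a b1 u w <= (1 + b2 / b1) * gg a b2 u w.
Proof. intros Ha H1 H2. pose proof (gg_nn a b2 u w Ha H2). unfold gg in *.
  assert (E: Rabs w / b1 = (b2 / b1) * (Rabs w / b2)) by (field; lra).
  pose proof (Rmax_l (Rabs u / a) (Rabs w / b2)). pose proof (Rmax_r (Rabs u / a) (Rabs w / b2)).
  assert (0 < b2 / b1) by (apply Rdiv_lt_0_compat; auto).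
  apply Rmax_lub.
  - set (M := Rmax (Rabs u / a) (Rabs w / b2)) in *.
    assert (0 <= b2/b1 * M) by (apply Rmult_le_pos; lra). lra.
  - rewrite E. set (M := Rmax (Rabs u / a) (Rabs w / b2)) in *.
    assert (b2/b1 * (Rabs w / b2) <= b2/b1 * M) by (apply Rmult_le_compat_l; lra). lra.
Qed.

Lemma cont_gg {X} (dX : X -> X -> R) a b U W p : contg dX dR U p -> contg dX dR W p ->
  contg dX dR (fun q => gg a b (U q) (W q)) p.
Proof. intros. unfold gg. apply cont_max; apply cont_mult; try apply cont_const; apply cont_abs; auto. Qed.

Definition gmu a b1 b2 u w := ru (gg a b1) (gg a b2) u w.
Definition gmw a b1 b2 u w := rw (gg a b1) (gg a b2) u w.

Section GM.
Variables a b1 b2 : R.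
Hypothesis Ha : 0 < a.
Hypothesis Hb1 : 0 < b1.
Hypothesis Hb2 : 0 < b2.

Lemma gm_inv u w : gmu a b2 b1 (gmu a b1 b2 u w) (gmw a b1 b2 u w) = u /\
                   gmw a b2 b1 (gmu a b1 b2 u w) (gmw a b1 b2 u w) = w.
Proof. apply r_inv; intros; try apply gg_hom; try apply gg_pos; auto. Qed.

Lemma gm_img u w : gg a b2 (gmu a b1 b2 u w) (gmw a b1 b2 u w) = gg a b1 u w.
Proof. apply N2_img; intros; try apply gg_hom; try apply gg_pos; auto. Qed.

Lemma gm_scal u w : exists k, 0 <= k /\ gmu a b1 b2 u w = k * u /\ gmw a b1 b2 u w = k * w /\
  ((u <> 0 \/ w <> 0) -> 0 < k).
Proof. apply r_scal; intros; try apply gg_pos; auto. Qed.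

Lemma gm_id u w : Rabs w / b2 <= Rabs u / a -> Rabs w / b1 <= Rabs u / a ->
  gmu a b1 b2 u w = u /\ gmw a b1 b2 u w = w.
Proof. intros H H'. apply r_id; intros; try apply gg_hom; try apply gg_pos; auto.
  unfold gg. rewrite !Rmax_left by lra. auto.
Qed.

Lemma cont_gmu {X} (dX : X -> X -> R) U W p : contg dX dR U p -> contg dX dR W p ->
  contg dX dR (fun q => gmu a b1 b2 (U q) (W q)) p.
Proof. intros. exact (cont_ru (gg a b1) (gg a b2) (fun u w H => gg_pos a b1 u w Ha Hb1 H) (fun u w H => gg_pos a b2 u w Ha Hb2 H) (1 + b2/b1)
    (fun u w => gg_bnd a b1 b2 u w Ha Hb1 Hb2) (fun X dX U W p => cont_gg dX a b1 U W p) (fun X dX U W p => cont_gg dX a b2 U W p) dX U W p H H0). Qed.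
Lemma cont_gmw {X} (dX : X -> X -> R) U W p : contg dX dR U p -> contg dX dR W p ->
  contg dX dR (fun q => gmw a b1 b2 (U q) (W q)) p.
Proof. intros. exact (cont_rw (gg a b1) (gg a b2) (fun u w H => gg_pos a b1 u w Ha Hb1 H) (fun u w H => gg_pos a b2 u w Ha Hb2 H) (1 + b2/b1)
    (fun u w => gg_bnd a b1 b2 u w Ha Hb1 Hb2) (fun X dX U W p => cont_gg dX a b1 U W p) (fun X dX U W p => cont_gg dX a b2 U W p) dX U W p H H0). Qed.
End GM.

Lemma gg_le1 a b u w : 0 < a -> 0 < b -> (gg a b u w <= 1 <-> Rabs u <= a /\ Rabs w <= b).
Proof. intros Ha Hb. unfold gg. split.
  - intro H. pose proof (Rmax_l (Rabs u / a) (Rabs w / b)). pose proof (Rmax_r (Rabs u / a) (Rabs w / b)).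
    split.
    + apply (Rmult_le_reg_r (/ a)). apply Rinv_0_lt_compat; auto. rewrite Rinv_r by lra. unfold Rdiv in *. lra.
    + apply (Rmult_le_reg_r (/ b)). apply Rinv_0_lt_compat; auto. rewrite Rinv_r by lra. unfold Rdiv in *. lra.
  - intros [H1 H2]. apply Rmax_lub.
    + apply (Rmult_le_reg_r a); auto. unfold Rdiv. rewrite Rmult_assoc, Rinv_l by lra. lra.
    + apply (Rmult_le_reg_r b); auto. unfold Rdiv. rewrite Rmult_assoc, Rinv_l by lra. lra.
Qed.

Section TR.
Variables a b1 b2 : R.
Hypothesis Ha : 0 < a.
Hypothesis Hb1 : 0 < b1.
Hypothesis Hb2 : 0 < b2.
Hypothesis Hb : b2 <= b1.

Lemma tr_box u w : (Rabs u <= a /\ 0 <= w <= b1) <->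
  (Rabs (gmu a b1 b2 u w) <= a /\ 0 <= gmw a b1 b2 u w <= b2).
Proof. pose proof (gm_img a b1 b2 Ha Hb1 Hb2 u w) as E.
  destruct (gm_scal a b1 b2 Ha Hb1 Hb2 u w) as [k [Hk [E1 [E2 Hp]]]].
  split.
  - intros [H1 [H2 H3]].
    assert (gg a b1 u w <= 1) by (apply gg_le1; auto; split; auto; rewrite Rabs_right; lra).
    rewrite <- E in H. apply gg_le1 in H; auto. destruct H as [H H'].
    split; auto. split. rewrite E2. apply Rmult_le_pos; auto.
    apply Rle_trans with (Rabs (gmw a b1 b2 u w)); auto. apply Rle_abs.
  - intros [H1 [H2 H3]].
    assert (gg a b2 (gmu a b1 b2 u w) (gmw a b1 b2 u w) <= 1) by (apply gg_le1; auto; split; auto; rewrite Rabs_right; lra).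
    rewrite E in H. apply gg_le1 in H; auto. destruct H as [H H'].
    split; auto. assert (0 <= w).
    { destruct (Rle_dec 0 w); auto. assert (0 < k) by (apply Hp; right; lra).
      rewrite E2 in H2. assert (k * w < 0). { assert (k * (-w) > 0) by (apply Rmult_lt_0_compat; lra). lra. } lra. }
    split; auto. apply Rle_trans with (Rabs w); auto. apply Rle_abs.
Qed.

Lemma tr_id u w : Rabs w / b2 <= Rabs u / a -> gmu a b1 b2 u w = u /\ gmw a b1 b2 u w = w.
Proof. intro H. apply gm_id; auto. apply Rle_trans with (Rabs w / b2); auto.
  apply Rmult_le_compat_l. apply Rabs_pos. apply Rinv_le_contravar; auto. Qed.

Lemma tr_id' u w : Rabs (gmw a b1 b2 u w) / b2 <= Rabs (gmu a b1 b2 u w) / a ->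
  gmu a b1 b2 u w = u /\ gmw a b1 b2 u w = w.
Proof. intro H. destruct (gm_scal a b1 b2 Ha Hb1 Hb2 u w) as [k [Hk [E1 [E2 Hp]]]].
  destruct (nz_dec u w) as [[-> ->]|Hn].
  - rewrite E1, E2. split; ring.
  - apply tr_id. specialize (Hp Hn). rewrite E1, E2, !Rabs_mult, (Rabs_right k) in H by lra.
    unfold Rdiv in *. apply (Rmult_le_reg_l k); auto. lra.
Qed.
End TR.

Definition inb (x1 x2 y1 y2 z1 z2 : R) (p : P3) : Prop :=
  x1 <= p3x p <= x2 /\ y1 <= p3y p <= y2 /\ z1 <= p3z p <= z2.

Definition Aset (p : P3) : Prop :=
  inb 0 2 0 4 0 1 p \/ inb 2 6 0 1 0 2 p \/ inb 2 6 2 3 0 2 p \/ inb 6 8 0 4 0 1 p.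
Definition A1 (p : P3) : Prop :=
  inb 0 2 0 4 0 1 p \/ inb 2 6 0 1 0 1 p \/ inb 2 6 2 3 0 1 p \/ inb 6 8 0 4 0 1 p.
Definition A2 (p : P3) : Prop :=
  inb 0 2 0 3 0 1 p \/ inb 2 6 0 1 0 1 p \/ inb 2 6 2 3 0 1 p \/ inb 6 8 0 4 0 1 p.
Definition A3 (p : P3) : Prop :=
  inb 0 2 0 3 0 1 p \/ inb 2 6 0 1 0 1 p \/ inb 2 6 2 3 0 1 p \/ inb 6 8 0 3 0 1 p.

Definition Psi (p : P3) : P3 :=
  mkP3 (4 + gmu 2 2 1 (p3x p - 4) (p3z p)) (p3y p) (gmw 2 2 1 (p3x p - 4) (p3z p)).
Definition PsiI (p : P3) : P3 :=
  mkP3 (4 + gmu 2 1 2 (p3x p - 4) (p3z p)) (p3y p) (gmw 2 1 2 (p3x p - 4) (p3z p)).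
Definition Om1 (p : P3) : P3 :=
  mkP3 (1 + gmu 1 4 3 (p3x p - 1) (p3y p)) (gmw 1 4 3 (p3x p - 1) (p3y p)) (p3z p).
Definition Om1I (p : P3) : P3 :=
  mkP3 (1 + gmu 1 3 4 (p3x p - 1) (p3y p)) (gmw 1 3 4 (p3x p - 1) (p3y p)) (p3z p).
Definition Om2 (p : P3) : P3 :=
  mkP3 (7 + gmu 1 4 3 (p3x p - 7) (p3y p)) (gmw 1 4 3 (p3x p - 7) (p3y p)) (p3z p).
Definition Om2I (p : P3) : P3 :=
  mkP3 (7 + gmu 1 3 4 (p3x p - 7) (p3y p)) (gmw 1 3 4 (p3x p - 7) (p3y p)) (p3z p).

Lemma Psi_inv p : PsiI (Psi p) = p.
Proof. destruct (gm_inv 2 2 1 ltac:(lra) ltac:(lra) ltac:(lra) (p3x p - 4) (p3z p)) as [E1 E2].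
  unfold PsiI, Psi. simpl. replace (4 + gmu 2 2 1 (p3x p - 4) (p3z p) - 4) with (gmu 2 2 1 (p3x p - 4) (p3z p)) by ring.
  rewrite E1, E2. destruct p; simpl; f_equal; ring. Qed.
Lemma Psi_inv' p : Psi (PsiI p) = p.
Proof. destruct (gm_inv 2 1 2 ltac:(lra) ltac:(lra) ltac:(lra) (p3x p - 4) (p3z p)) as [E1 E2].
  unfold PsiI, Psi. simpl. replace (4 + gmu 2 1 2 (p3x p - 4) (p3z p) - 4) with (gmu 2 1 2 (p3x p - 4) (p3z p)) by ring.
  rewrite E1, E2. destruct p; simpl; f_equal; ring. Qed.
Lemma Om1_inv p : Om1I (Om1 p) = p.
Proof. destruct (gm_inv 1 4 3 ltac:(lra) ltac:(lra) ltac:(lra) (p3x p - 1) (p3y p)) as [E1 E2].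
  unfold Om1I, Om1. simpl. replace (1 + gmu 1 4 3 (p3x p - 1) (p3y p) - 1) with (gmu 1 4 3 (p3x p - 1) (p3y p)) by ring.
  rewrite E1, E2. destruct p; simpl; f_equal; ring. Qed.
Lemma Om1_inv' p : Om1 (Om1I p) = p.
Proof. destruct (gm_inv 1 3 4 ltac:(lra) ltac:(lra) ltac:(lra) (p3x p - 1) (p3y p)) as [E1 E2].
  unfold Om1I, Om1. simpl. replace (1 + gmu 1 3 4 (p3x p - 1) (p3y p) - 1) with (gmu 1 3 4 (p3x p - 1) (p3y p)) by ring.
  rewrite E1, E2. destruct p; simpl; f_equal; ring. Qed.
Lemma Om2_inv p : Om2I (Om2 p) = p.
Proof. destruct (gm_inv 1 4 3 ltac:(lra) ltac:(lra) ltac:(lra) (p3x p - 7) (p3y p)) as [E1 E2].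
  unfold Om2I, Om2. simpl. replace (7 + gmu 1 4 3 (p3x p - 7) (p3y p) - 7) with (gmu 1 4 3 (p3x p - 7) (p3y p)) by ring.
  rewrite E1, E2. destruct p; simpl; f_equal; ring. Qed.
Lemma Om2_inv' p : Om2 (Om2I p) = p.
Proof. destruct (gm_inv 1 3 4 ltac:(lra) ltac:(lra) ltac:(lra) (p3x p - 7) (p3y p)) as [E1 E2].
  unfold Om2I, Om2. simpl. replace (7 + gmu 1 3 4 (p3x p - 7) (p3y p) - 7) with (gmu 1 3 4 (p3x p - 7) (p3y p)) by ring.
  rewrite E1, E2. destruct p; simpl; f_equal; ring. Qed.

Ltac cgm := first [ apply cont_gmu | apply cont_gmw ]; try lra;
  first [apply cont_minus; [apply cont_x | apply cont_const] | apply cont_x | apply cont_y | apply cont_z].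

Lemma Psi_cont p : contg dist3 dist3 Psi p.
Proof. unfold Psi. apply contV3. apply cont_plus. apply cont_const. cgm. apply cont_y. cgm. Qed.
Lemma PsiI_cont p : contg dist3 dist3 PsiI p.
Proof. unfold PsiI. apply contV3. apply cont_plus. apply cont_const. cgm. apply cont_y. cgm. Qed.
Lemma Om1_cont p : contg dist3 dist3 Om1 p.
Proof. unfold Om1. apply contV3. apply cont_plus. apply cont_const. cgm. cgm. apply cont_z. Qed.
Lemma Om1I_cont p : contg dist3 dist3 Om1I p.
Proof. unfold Om1I. apply contV3. apply cont_plus. apply cont_const. cgm. cgm. apply cont_z. Qed.
Lemma Om2_cont p : contg dist3 dist3 Om2 p.
Proof. unfold Om2. apply contV3. apply cont_plus. apply cont_const. cgm. cgm. apply cont_z. Qed.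
Lemma Om2I_cont p : contg dist3 dist3 Om2I p.
Proof. unfold Om2I. apply contV3. apply cont_plus. apply cont_const. cgm. cgm. apply cont_z. Qed.

Ltac absl := unfold Rabs in *; repeat match goal with
  | H : context [Rcase_abs ?x] |- _ => destruct (Rcase_abs x)
  | |- context [Rcase_abs ?x] => destruct (Rcase_abs x) end; lra.

Lemma chain1 p : Aset p <-> A1 (Psi p).
Proof. unfold Aset, A1, inb, Psi; simpl.
  set (u := p3x p - 4). set (w := p3z p).
  pose proof (tr_box 2 2 1 ltac:(lra) ltac:(lra) ltac:(lra) u w) as TB.
  pose proof (tr_id 2 2 1 ltac:(lra) ltac:(lra) ltac:(lra) ltac:(lra) u w) as TI.
  pose proof (tr_id' 2 2 1 ltac:(lra) ltac:(lra) ltac:(lra) ltac:(lra) u w) as TI'.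
  set (mu := gmu 2 2 1 u w) in *. set (mw := gmw 2 2 1 u w) in *.
  assert (Hu : p3x p = u + 4) by (unfold u; ring). rewrite Hu. clearbody u w. clear Hu.
  split.
  - intros [H|[H|[H|H]]].
    + destruct TI as [E1 E2]; [absl|]. rewrite E1, E2. left. lra.
    + destruct TB as [TB _]. destruct TB as [T1 T2]; [split; [absl|lra]|]. right; left.
      repeat split; try absl; lra.
    + destruct TB as [TB _]. destruct TB as [T1 T2]; [split; [absl|lra]|]. right; right; left.
      repeat split; try absl; lra.
    + destruct TI as [E1 E2]; [absl|]. rewrite E1, E2. right; right; right. lra.
  - intros [H|[H|[H|H]]].
    + destruct TI' as [E1 E2]; [absl|]. rewrite E1, E2 in H. left. lra.
    + destruct TB as [_ TB]. destruct TB as [T1 T2]; [split; [absl|lra]|]. right; left.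
      repeat split; try absl; lra.
    + destruct TB as [_ TB]. destruct TB as [T1 T2]; [split; [absl|lra]|]. right; right; left.
      repeat split; try absl; lra.
    + destruct TI' as [E1 E2]; [absl|]. rewrite E1, E2 in H. right; right; right. lra.
Qed.

Lemma chain2 p : A1 p <-> A2 (Om1 p).
Proof. unfold A1, A2, inb, Om1; simpl.
  set (u := p3x p - 1). set (w := p3y p).
  pose proof (tr_box 1 4 3 ltac:(lra) ltac:(lra) ltac:(lra) u w) as TB.
  pose proof (tr_id 1 4 3 ltac:(lra) ltac:(lra) ltac:(lra) ltac:(lra) u w) as TI.
  pose proof (tr_id' 1 4 3 ltac:(lra) ltac:(lra) ltac:(lra) ltac:(lra) u w) as TI'.
  set (mu := gmu 1 4 3 u w) in *. set (mw := gmw 1 4 3 u w) in *.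
  assert (Hu : p3x p = u + 1) by (unfold u; ring). rewrite Hu. clearbody u w. clear Hu.
  split.
  - intros [H|[H|[H|H]]].
    + destruct TB as [TB _]. destruct TB as [T1 T2]; [split; [absl|lra]|]. left.
      repeat split; try absl; lra.
    + destruct TI as [E1 E2]; [absl|]. rewrite E1, E2. right; left. lra.
    + destruct TI as [E1 E2]; [absl|]. rewrite E1, E2. right; right; left. lra.
    + destruct TI as [E1 E2]; [absl|]. rewrite E1, E2. right; right; right. lra.
  - intros [H|[H|[H|H]]].
    + destruct TB as [_ TB]. destruct TB as [T1 T2]; [split; [absl|lra]|]. left.
      repeat split; try absl; lra.
    + destruct TI' as [E1 E2]; [absl|]. rewrite E1, E2 in H. right; left. lra.
    + destruct TI' as [E1 E2]; [absl|]. rewrite E1, E2 in H. right; right; left. lra.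
    + destruct TI' as [E1 E2]; [absl|]. rewrite E1, E2 in H. right; right; right. lra.
Qed.

Lemma chain3 p : A2 p <-> A3 (Om2 p).
Proof. unfold A2, A3, inb, Om2; simpl.
  set (u := p3x p - 7). set (w := p3y p).
  pose proof (tr_box 1 4 3 ltac:(lra) ltac:(lra) ltac:(lra) u w) as TB.
  pose proof (tr_id 1 4 3 ltac:(lra) ltac:(lra) ltac:(lra) ltac:(lra) u w) as TI.
  pose proof (tr_id' 1 4 3 ltac:(lra) ltac:(lra) ltac:(lra) ltac:(lra) u w) as TI'.
  set (mu := gmu 1 4 3 u w) in *. set (mw := gmw 1 4 3 u w) in *.
  assert (Hu : p3x p = u + 7) by (unfold u; ring). rewrite Hu. clearbody u w. clear Hu.
  split.
  - intros [H|[H|[H|H]]].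
    + destruct TI as [E1 E2]; [absl|]. rewrite E1, E2. left. lra.
    + destruct TI as [E1 E2]; [absl|]. rewrite E1, E2. right; left. lra.
    + destruct TI as [E1 E2]; [absl|]. rewrite E1, E2. right; right; left. lra.
    + destruct TB as [TB _]. destruct TB as [T1 T2]; [split; [absl|lra]|]. right; right; right.
      repeat split; try absl; lra.
  - intros [H|[H|[H|H]]].
    + destruct TI' as [E1 E2]; [absl|]. rewrite E1, E2 in H. left. lra.
    + destruct TI' as [E1 E2]; [absl|]. rewrite E1, E2 in H. right; left. lra.
    + destruct TI' as [E1 E2]; [absl|]. rewrite E1, E2 in H. right; right; left. lra.
    + destruct TB as [_ TB]. destruct TB as [T1 T2]; [split; [absl|lra]|]. right; right; right.
      repeat split; try absl; lra.
Qed.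

Definition E2 (u w : R) : R := sqrt (u * u + w * w).

Lemma E2_hom k u w : 0 <= k -> E2 (k*u) (k*w) = k * E2 u w.
Proof. intro Hk. unfold E2. replace (k * u * (k * u) + k * w * (k * w)) with ((k*k) * (u*u + w*w)) by ring.
  rewrite sqrt_mult_alt by (apply Rle_0_sqr). rewrite sqrt_square; auto. Qed.

Lemma E2_pos u w : u <> 0 \/ w <> 0 -> 0 < E2 u w.
Proof. intro H. unfold E2. apply sqrt_lt_R0. destruct H as [H|H].
  - pose proof (Rsqr_pos_lt u H). pose proof (Rle_0_sqr w). unfold Rsqr in *. lra.
  - pose proof (Rsqr_pos_lt w H). pose proof (Rle_0_sqr u). unfold Rsqr in *. lra.
Qed.

Lemma E2_sq u w : E2 u w * E2 u w = u * u + w * w.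
Proof. unfold E2. apply sqrt_sqrt. pose proof (Rle_0_sqr u). pose proof (Rle_0_sqr w). unfold Rsqr in *. lra. Qed.

Lemma E2_nn u w : 0 <= E2 u w.
Proof. apply sqrt_pos. Qed.

Lemma g11_le_E2 u w : gg 1 1 u w <= 1 * E2 u w.
Proof. rewrite Rmult_1_l. unfold gg. rewrite !Rdiv_1_r. apply Rmax_lub.
  - unfold E2. apply sqrt_ge_abs. pose proof (Rle_0_sqr w). unfold Rsqr in *. simpl. lra.
  - unfold E2. apply sqrt_ge_abs. pose proof (Rle_0_sqr u). unfold Rsqr in *. simpl. lra.
Qed.

Lemma E2_le_g11 u w : E2 u w <= 2 * gg 1 1 u w.
Proof. unfold gg. rewrite !Rdiv_1_r. unfold E2. apply sqrt_le_sum.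
  - pose proof (Rmax_l (Rabs u) (Rabs w)). pose proof (Rabs_pos u). lra.
  - set (M := Rmax (Rabs u) (Rabs w)). pose proof (Rmax_l (Rabs u) (Rabs w)). pose proof (Rmax_r (Rabs u) (Rabs w)).
    fold M in H, H0. pose proof (Rabs_pos u). pose proof (Rabs_pos w).
    assert (u * u = Rabs u * Rabs u) by (rewrite <- Rabs_mult; rewrite Rabs_right; [auto| apply Rle_ge, Rle_0_sqr]).
    assert (w * w = Rabs w * Rabs w) by (rewrite <- Rabs_mult; rewrite Rabs_right; [auto| apply Rle_ge, Rle_0_sqr]).
    assert (Rabs u * Rabs u <= M * M) by (apply Rmult_le_compat; auto).
    assert (Rabs w * Rabs w <= M * M) by (apply Rmult_le_compat; auto).
    pose proof (Rle_0_sqr M). unfold Rsqr in *. replace ((2 * M)^2) with (4 * (M*M)) by ring. lra.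
Qed.

Lemma cont_E2 {X} (dX : X -> X -> R) U W p : contg dX dR U p -> contg dX dR W p ->
  contg dX dR (fun q => E2 (U q) (W q)) p.
Proof. intros. unfold E2. apply cont_sqrt. apply cont_plus; apply cont_mult; auto. Qed.

Lemma g11_hom k u w : 0 <= k -> gg 1 1 (k*u) (k*w) = k * gg 1 1 u w.
Proof. apply gg_hom. Qed.
Lemma g11_pos u w : u <> 0 \/ w <> 0 -> 0 < gg 1 1 u w.
Proof. intro. apply gg_pos; auto; lra. Qed.
Lemma cont_g11 {X} (dX : X -> X -> R) U W p : contg dX dR U p -> contg dX dR W p ->
  contg dX dR (fun q => gg 1 1 (U q) (W q)) p.
Proof. apply cont_gg. Qed.

(* square -> disc and back *)
Definition Da s t := ru (gg 1 1) E2 s t.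
Definition Db s t := rw (gg 1 1) E2 s t.
Definition Ea a b := ru E2 (gg 1 1) a b.
Definition Eb a b := rw E2 (gg 1 1) a b.

Lemma DE_inv s t : Ea (Da s t) (Db s t) = s /\ Eb (Da s t) (Db s t) = t.
Proof. apply r_inv. apply g11_hom. apply E2_hom. apply g11_pos. apply E2_pos. Qed.
Lemma ED_inv a b : Da (Ea a b) (Eb a b) = a /\ Db (Ea a b) (Eb a b) = b.
Proof. apply r_inv. apply E2_hom. apply g11_hom. apply E2_pos. apply g11_pos. Qed.
Lemma D_norm s t : Da s t * Da s t + Db s t * Db s t = gg 1 1 s t * gg 1 1 s t.
Proof. rewrite <- E2_sq. unfold Da, Db. rewrite N2_img; auto. apply g11_hom. apply E2_hom. apply g11_pos. apply E2_pos. Qed.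

Lemma cont_Da {X} (dX : X -> X -> R) U W p : contg dX dR U p -> contg dX dR W p ->
  contg dX dR (fun q => Da (U q) (W q)) p.
Proof. intros. exact (cont_ru (gg 1 1) E2 g11_pos E2_pos 1 g11_le_E2 (fun X dX U W p => cont_g11 dX U W p) (fun X dX U W p => cont_E2 dX U W p) dX U W p H H0). Qed.
Lemma cont_Db {X} (dX : X -> X -> R) U W p : contg dX dR U p -> contg dX dR W p ->
  contg dX dR (fun q => Db (U q) (W q)) p.
Proof. intros. exact (cont_rw (gg 1 1) E2 g11_pos E2_pos 1 g11_le_E2 (fun X dX U W p => cont_g11 dX U W p) (fun X dX U W p => cont_E2 dX U W p) dX U W p H H0). Qed.
Lemma cont_Ea {X} (dX : X -> X -> R) U W p : contg dX dR U p -> contg dX dR W p ->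
  contg dX dR (fun q => Ea (U q) (W q)) p.
Proof. intros. exact (cont_ru E2 (gg 1 1) E2_pos g11_pos 2 E2_le_g11 (fun X dX U W p => cont_E2 dX U W p) (fun X dX U W p => cont_g11 dX U W p) dX U W p H H0). Qed.
Lemma cont_Eb {X} (dX : X -> X -> R) U W p : contg dX dR U p -> contg dX dR W p ->
  contg dX dR (fun q => Eb (U q) (W q)) p.
Proof. intros. exact (cont_rw E2 (gg 1 1) E2_pos g11_pos 2 E2_le_g11 (fun X dX U W p => cont_E2 dX U W p) (fun X dX U W p => cont_g11 dX U W p) dX U W p H H0). Qed.

Definition gin u w := gg 2 (/2) u w.
Definition gout u w := gg 4 (3/2) u w.

Lemma gin_pos u w : u <> 0 \/ w <> 0 -> 0 < gin u w.
Proof. intro; apply gg_pos; auto; lra. Qed.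
Lemma gout_pos u w : u <> 0 \/ w <> 0 -> 0 < gout u w.
Proof. intro; apply gg_pos; auto; lra. Qed.
Lemma gin_ge u w : 2 * gout u w <= gin u w.
Proof. unfold gin, gout, gg.
  pose proof (Rmax_l (Rabs u / 2) (Rabs w / / 2)). pose proof (Rmax_r (Rabs u / 2) (Rabs w / / 2)).
  pose proof (Rabs_pos w).
  assert (Rabs w / / 2 = 2 * Rabs w) by (field). 
  assert (2 * Rmax (Rabs u / 4) (Rabs w / (3 / 2)) = Rmax (Rabs u / 2) (4 / 3 * Rabs w)).
  { rewrite <- Rmax_scal by lra. f_equal; field. }
  rewrite H3. apply Rmax_lub; lra.
Qed.
Lemma lnd_pos u w : u <> 0 \/ w <> 0 -> 0 < ln (gin u w) - ln (gout u w).
Proof. intro H. pose proof (gin_pos u w H). pose proof (gout_pos u w H). pose proof (gin_ge u w).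
  assert (ln (gout u w) < ln (gin u w)) by (apply ln_increasing; lra). lra. Qed.

Definition sF u w := ln (gin u w) / (ln (gin u w) - ln (gout u w)).
Definition rho (s c d : R) := exp (-(1-s) * ln (gin c d) - s * ln (gout c d)).

Definition Ffin (p : P3) : P4 :=
  mkP4 (Da (2 * sF (p3x p - 4) (p3y p - 3/2) - 1) (2 * p3z p - 1))
       (Db (2 * sF (p3x p - 4) (p3y p - 3/2) - 1) (2 * p3z p - 1))
       ((p3x p - 4) / E2 (p3x p - 4) (p3y p - 3/2))
       ((p3y p - 3/2) / E2 (p3x p - 4) (p3y p - 3/2)).
Definition Gfin (q : P4) : P3 :=
  mkP3 (4 + rho ((Ea (p4a q) (p4b q) + 1)/2) (p4c q) (p4d q) * p4c q)
       (3/2 + rho ((Ea (p4a q) (p4b q) + 1)/2) (p4c q) (p4d q) * p4d q)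
       ((Eb (p4a q) (p4b q) + 1)/2).

Lemma gscale (a b k u w : R) : 0 < k -> gg a b (k * u) (k * w) = k * gg a b u w.
Proof. intro; apply gg_hom; lra. Qed.

Lemma rho_F u w : u <> 0 \/ w <> 0 -> rho (sF u w) (u / E2 u w) (w / E2 u w) = E2 u w.
Proof. intro H. pose proof (E2_pos u w H) as Hn. pose proof (gin_pos u w H). pose proof (gout_pos u w H).
  pose proof (lnd_pos u w H).
  unfold rho. unfold Rdiv. rewrite (Rmult_comm u), (Rmult_comm w).
  unfold gin, gout. rewrite !gscale by (apply Rinv_0_lt_compat; auto).
  fold (gin u w) (gout u w).
  rewrite !ln_mult by (try apply Rinv_0_lt_compat; auto).
  rewrite ln_Rinv by auto.
  replace (- (1 - sF u w) * (- ln (E2 u w) + ln (gin u w)) - sF u w * (- ln (E2 u w) + ln (gout u w)))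
    with (ln (E2 u w)).
  apply exp_ln; auto.
  unfold sF. field. lra.
Qed.

Lemma F_G p : (p3x p - 4 <> 0 \/ p3y p - 3/2 <> 0) -> Gfin (Ffin p) = p.
Proof. intro H. unfold Gfin, Ffin; simpl.
  destruct (DE_inv (2 * sF (p3x p - 4) (p3y p - 3 / 2) - 1) (2 * p3z p - 1)) as [E1 E2'].
  rewrite E1, E2'.
  replace ((2 * sF (p3x p - 4) (p3y p - 3 / 2) - 1 + 1) / 2) with (sF (p3x p - 4) (p3y p - 3 / 2)) by field.
  rewrite rho_F by auto. pose proof (E2_pos _ _ H).
  set (n := E2 (p3x p - 4) (p3y p - 3 / 2)) in *. assert (n <> 0) by lra. clearbody n.
  destruct p; simpl in *. f_equal; field; auto.
Qed.

Lemma E2_unit c d : c * c + d * d = 1 -> E2 c d = 1.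
Proof. intro H. unfold E2. rewrite H. apply sqrt_1. Qed.

Lemma unit_nz c d : c * c + d * d = 1 -> c <> 0 \/ d <> 0.
Proof. intro H. destruct (Req_dec c 0) as [->|]; auto. right. intro Hd. subst d. lra. Qed.

Lemma alg_s s A B : 0 < A - B -> (- (1 - s) * A - s * B + A) / (- (1 - s) * A - s * B + A - (- (1 - s) * A - s * B + B)) = s.
Proof. intro. field. lra. Qed.

Lemma G_F q : p4c q * p4c q + p4d q * p4d q = 1 -> Ffin (Gfin q) = q.
Proof. intro H. unfold Gfin, Ffin; simpl.
  set (s := (Ea (p4a q) (p4b q) + 1) / 2).
  set (c := p4c q) in *. set (d := p4d q) in *.
  set (r := rho s c d).
  assert (Hr : 0 < r) by apply exp_pos.
  pose proof (unit_nz c d H) as Hnz.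
  replace (4 + r * c - 4) with (r * c) by ring.
  replace (3/2 + r * d - 3/2) with (r * d) by ring.
  rewrite E2_hom by lra. rewrite E2_unit by auto.
  assert (Hs : sF (r * c) (r * d) = s).
  { unfold sF, gin, gout. rewrite !gscale by auto. fold (gin c d) (gout c d).
    pose proof (gin_pos c d Hnz). pose proof (gout_pos c d Hnz). pose proof (lnd_pos c d Hnz).
    rewrite !ln_mult by auto. unfold r, rho. rewrite ln_exp. apply alg_s. lra. }
  rewrite Hs. unfold s.
  replace (2 * ((Ea (p4a q) (p4b q) + 1) / 2) - 1) with (Ea (p4a q) (p4b q)) by field.
  replace (2 * ((Eb (p4a q) (p4b q) + 1) / 2) - 1) with (Eb (p4a q) (p4b q)) by field.
  destruct (ED_inv (p4a q) (p4b q)) as [E1 E2']. rewrite E1, E2'.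
  replace (r * c / (r * 1)) with c by (field; lra).
  replace (r * d / (r * 1)) with d by (field; lra).
  unfold c, d. destruct q; reflexivity.
Qed.

Section CF.
Context {X : Type} (dX : X -> X -> R).
Lemma cont_gin U W p : contg dX dR U p -> contg dX dR W p -> contg dX dR (fun q => gin (U q) (W q)) p.
Proof. apply cont_gg. Qed.
Lemma cont_gout U W p : contg dX dR U p -> contg dX dR W p -> contg dX dR (fun q => gout (U q) (W q)) p.
Proof. apply cont_gg. Qed.
Lemma cont_sF U W p : contg dX dR U p -> contg dX dR W p -> (U p <> 0 \/ W p <> 0) ->
  contg dX dR (fun q => sF (U q) (W q)) p.
Proof. intros HU HW H. unfold sF. pose proof (gin_pos _ _ H). pose proof (gout_pos _ _ H). pose proof (lnd_pos _ _ H).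
  apply cont_div. apply cont_ln; auto. apply cont_gin; auto.
  apply cont_minus; apply cont_ln; auto. apply cont_gin; auto. apply cont_gout; auto. lra. Qed.
Lemma cont_rho S U W p : contg dX dR S p -> contg dX dR U p -> contg dX dR W p -> (U p <> 0 \/ W p <> 0) ->
  contg dX dR (fun q => rho (S q) (U q) (W q)) p.
Proof. intros HS HU HW H. unfold rho. pose proof (gin_pos _ _ H). pose proof (gout_pos _ _ H).
  apply cont_exp. apply cont_minus; apply cont_mult.
  apply cont_opp, cont_minus; auto; apply cont_const. apply cont_ln; auto; apply cont_gin; auto.
  auto. apply cont_ln; auto; apply cont_gout; auto. Qed.
End CF.

Definition NZ (p : P3) : Prop := p3x p - 4 <> 0 \/ p3y p - 3/2 <> 0.

Lemma Ffin_cont p : NZ p -> contg dist3 dist4 Ffin p.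
Proof. intro H. unfold Ffin. pose proof (E2_pos _ _ H).
  assert (HU : contg dist3 dR (fun q => p3x q - 4) p) by (apply cont_minus; [apply cont_x|apply cont_const]).
  assert (HW : contg dist3 dR (fun q => p3y q - 3/2) p) by (apply cont_minus; [apply cont_y|apply cont_const]).
  assert (HS : contg dist3 dR (fun q => 2 * sF (p3x q - 4) (p3y q - 3/2) - 1) p).
  { apply cont_minus; [|apply cont_const]. apply cont_scal. apply cont_sF; auto. }
  assert (HT : contg dist3 dR (fun q => 2 * p3z q - 1) p).
  { apply cont_minus; [|apply cont_const]. apply cont_scal. apply cont_z. }
  apply contV4.
  - apply (cont_Da dist3 _ _ p HS HT).
  - apply (cont_Db dist3 _ _ p HS HT).
  - apply cont_div; auto. apply cont_E2; auto. lra.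
  - apply cont_div; auto. apply cont_E2; auto. lra.
Qed.

Lemma Gfin_cont q : (p4c q <> 0 \/ p4d q <> 0) -> contg dist4 dist3 Gfin q.
Proof. intro H. unfold Gfin.
  assert (HS : contg dist4 dR (fun q => (Ea (p4a q) (p4b q) + 1) / 2) q).
  { apply cont_mult; [|apply cont_const]. apply cont_plus; [|apply cont_const]. apply cont_Ea; [apply cont_a|apply cont_b]. }
  apply contV3.
  - apply cont_plus; [apply cont_const|]. apply cont_mult; [|apply cont_c]. apply cont_rho; auto. apply cont_c. apply cont_d.
  - apply cont_plus; [apply cont_const|]. apply cont_mult; [|apply cont_d]. apply cont_rho; auto. apply cont_c. apply cont_d.
  - apply cont_mult; [|apply cont_const]. apply cont_plus; [|apply cont_const]. apply cont_Eb; [apply cont_a|apply cont_b].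
Qed.

Lemma pow2_mul x : x ^ 2 = x * x.
Proof. ring. Qed.

Lemma Ffin_circle p : NZ p -> (p4c (Ffin p))^2 + (p4d (Ffin p))^2 = 1.
Proof. intro H. unfold Ffin. cbn [p4c p4d]. rewrite !pow2_mul. pose proof (E2_pos _ _ H). pose proof (E2_sq (p3x p - 4) (p3y p - 3/2)).
  set (n := E2 (p3x p - 4) (p3y p - 3 / 2)) in *.
  replace ((p3x p - 4) / n * ((p3x p - 4) / n) + (p3y p - 3 / 2) / n * ((p3y p - 3 / 2) / n)) with (((p3x p - 4) * (p3x p - 4) + (p3y p - 3 / 2) * (p3y p - 3 / 2)) / (n * n)) by (field; lra).
  rewrite <- H1. field. lra. Qed.

Lemma ln_ge0_iff x : 0 < x -> (0 <= ln x <-> 1 <= x).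
Proof. intro Hx. split; intro H.
  - destruct (Rle_dec 1 x) as [|n]; auto. assert (ln x < ln 1) by (apply ln_increasing; lra). rewrite ln_1 in H0. lra.
  - rewrite <- ln_1. destruct (Req_dec x 1) as [->|]; [lra|]. left; apply ln_increasing; lra. Qed.
Lemma ln_le0_iff x : 0 < x -> (ln x <= 0 <-> x <= 1).
Proof. intro Hx. split; intro H.
  - destruct (Rle_dec x 1) as [|n]; auto. assert (ln 1 < ln x) by (apply ln_increasing; lra). rewrite ln_1 in H0. lra.
  - rewrite <- ln_1. destruct (Req_dec x 1) as [->|]; [lra|]. left; apply ln_increasing; lra. Qed.



Lemma gin_ge1_iff u w : 1 <= gin u w <-> ~ (Rabs u < 2 /\ Rabs w < 1/2).
Proof. unfold gin, gg, Rmax. destruct (Rle_dec (Rabs u / 2) (Rabs w / / 2)); split; intros.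
  - intros [H1 H2]. assert (Rabs w / / 2 = 2 * Rabs w) by field. lra.
  - assert (Rabs w / / 2 = 2 * Rabs w) by field. destruct (Rle_dec 1 (Rabs w / / 2)); auto.
    exfalso; apply H. split; lra.
  - intros [H1 H2]. lra.
  - assert (Rabs w / / 2 = 2 * Rabs w) by field. destruct (Rle_dec 1 (Rabs u / 2)); auto.
    exfalso; apply H. split; lra.
Qed.

Lemma gout_le1_iff u w : gout u w <= 1 <-> Rabs u <= 4 /\ Rabs w <= 3/2.
Proof. apply gg_le1; lra. Qed.

Lemma A3_iff p : A3 p <-> (Rabs (p3x p - 4) <= 4 /\ Rabs (p3y p - 3/2) <= 3/2 /\
  ~ (Rabs (p3x p - 4) < 2 /\ Rabs (p3y p - 3/2) < 1/2) /\ 0 <= p3z p <= 1).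
Proof. unfold A3, inb. destruct p as [x y z]; simpl. split.
  - intros [H|[H|[H|H]]]; (split; [absl|split; [absl|split; [intros [Q1 Q2]; absl| lra]]]).
  - intros [H1 [H2 [H3 H4]]].
    destruct (Rle_dec x 2). left. repeat split; try absl.
    destruct (Rle_dec 6 x). right; right; right. repeat split; try absl.
    destruct (Rle_dec y 1). right; left. repeat split; try absl.
    destruct (Rle_dec 2 y). right; right; left. repeat split; try absl.
    exfalso. apply H3. split; absl.
Qed.

Lemma A3_NZ p : A3 p -> NZ p.
Proof. intro H. apply A3_iff in H. destruct H as [_ [_ [H _]]]. unfold NZ.
  destruct (Req_dec (p3x p - 4) 0) as [E|E]; auto. destruct (Req_dec (p3y p - 3/2) 0) as [E'|E']; auto.
  exfalso; apply H. rewrite E, E', Rabs_R0. lra. Qed.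

Lemma Ffin_T p : NZ p -> (solid_torus (Ffin p) <-> A3 p).
Proof. intro H. unfold solid_torus. rewrite (Ffin_circle p H). rewrite A3_iff.
  unfold Ffin at 1 2. cbn [p4a p4b]. rewrite !pow2_mul, D_norm.
  set (s := sF (p3x p - 4) (p3y p - 3 / 2)).
  assert (Hs1 : 0 <= s <-> 1 <= gin (p3x p - 4) (p3y p - 3/2)).
  { unfold s, sF. pose proof (lnd_pos _ _ H). pose proof (gin_pos _ _ H). rewrite <- (ln_ge0_iff (gin (p3x p - 4) (p3y p - 3 / 2))) by auto.
    split; intro Q. apply (Rmult_le_reg_r (/ (ln (gin (p3x p - 4) (p3y p - 3 / 2)) - ln (gout (p3x p - 4) (p3y p - 3 / 2))))).
    apply Rinv_0_lt_compat; auto. rewrite Rmult_0_l. exact Q.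
    apply Rmult_le_pos; auto. left; apply Rinv_0_lt_compat; auto. }
  assert (Hs2 : s <= 1 <-> gout (p3x p - 4) (p3y p - 3/2) <= 1).
  { unfold s, sF. pose proof (lnd_pos _ _ H). pose proof (gout_pos _ _ H). rewrite <- (ln_le0_iff (gout (p3x p - 4) (p3y p - 3 / 2))) by auto.
    set (Li := ln (gin (p3x p - 4) (p3y p - 3 / 2))) in *. set (Lo := ln (gout (p3x p - 4) (p3y p - 3 / 2))) in *.
    split; intro Q.
    - assert (Li <= Li - Lo). { apply (Rmult_le_reg_r (/ (Li - Lo))). apply Rinv_0_lt_compat; auto.
        rewrite Rinv_r by lra. exact Q. } lra.
    - apply (Rmult_le_reg_r (Li - Lo)); auto. unfold Rdiv. rewrite Rmult_assoc, Rinv_l by lra. lra. }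
  rewrite gin_ge1_iff in Hs1. rewrite gout_le1_iff in Hs2.
  pose proof (gg_nn 1 1 (2 * s - 1) (2 * p3z p - 1) ltac:(lra) ltac:(lra)) as Hg.
  assert (E : gg 1 1 (2 * s - 1) (2 * p3z p - 1) * gg 1 1 (2 * s - 1) (2 * p3z p - 1) <= 1 <->
              gg 1 1 (2 * s - 1) (2 * p3z p - 1) <= 1).
  { set (g := gg 1 1 (2 * s - 1) (2 * p3z p - 1)) in *. split; intro Q.
    - destruct (Rle_dec g 1); auto. assert (1 * 1 < g * g) by (apply Rmult_le_0_lt_compat; lra). lra.
    - assert (g * g <= 1 * 1) by (apply Rmult_le_compat; lra). lra. }
  rewrite E, gg_le1 by lra.
  split.
  - intros [[Q1 Q2] _].
    assert (0 <= s <= 1) by absl. destruct H0. apply Hs1 in H0. apply Hs2 in H1. destruct H1.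
    repeat split; auto; absl.
  - intros [Q1 [Q2 [Q3 Q4]]]. assert (0 <= s) by (apply Hs1; auto). assert (s <= 1) by (apply Hs2; auto).
    repeat split; absl.
Qed.

Definition PathIn (S : set3) (p q : P3) : Prop :=
  exists g : R -> P3, g 0 = p /\ g 1 = q /\
    forall t, 0 <= t <= 1 -> S (g t) /\ contg dR dist3 g t.

Lemma path_same_side (S U V : set3) (g : R -> P3) :
  open3 U -> open3 V -> (forall p, S p -> U p \/ V p) -> (forall p, S p -> U p -> V p -> False) ->
  (forall t, 0 <= t <= 1 -> S (g t) /\ contg dR dist3 g t) -> U (g 0) -> U (g 1).
Proof.
  intros HU HV Hcov Hdis Hg H0.
  set (E := fun t => 0 <= t <= 1 /\ forall s, 0 <= s <= t -> U (g s)).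
  assert (Hb : bound E) by (exists 1; intros t [Ht _]; lra).
  assert (He : exists t, E t).
  { exists 0. split; [lra|]. intros s Hs. replace s with 0 by lra. auto. }
  destruct (completeness E Hb He) as [m [Hm1 Hm2]].
  assert (Hm0 : 0 <= m) by (apply Hm1; destruct He as [t Ht]; split; [lra|]; intros s Hs; replace s with 0 by lra; auto).
  assert (Hm1' : m <= 1) by (apply Hm2; intros t [Ht _]; lra).
  assert (Hbelow : forall s, 0 <= s < m -> U (g s)).
  { intros s Hs. destruct (classic (exists t, E t /\ s < t)) as [[t [[Ht1 Ht2] Hst]]|Hn].
    - apply Ht2. lra.
    - exfalso. assert (m <= s). { apply Hm2. intros t Ht. destruct (Rle_dec t s); auto.
        exfalso. apply Hn. exists t. split; auto. lra. } lra. }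
  destruct (Hg m (conj Hm0 Hm1')) as [HS Hc].
  destruct (Hcov _ HS) as [HUm|HVm].
  - destruct (Req_dec m 1) as [E1|E1].
    + rewrite <- E1. auto.
    + exfalso. destruct (HU _ HUm) as [r [Hr Hball]].
      destruct (Hc r Hr) as [d [Hd Hcd]].
      set (t0 := Rmin 1 (m + d/2)).
      assert (E t0).
      { split. unfold t0. split. apply Rmin_glb; lra. apply Rmin_l.
        intros s Hs. destruct (Rlt_dec s m). apply Hbelow; lra.
        apply Hball. unfold ball3. apply Hcd. unfold dR. rewrite Rabs_right by lra.
        assert (t0 <= m + d/2) by apply Rmin_r. lra. }
      assert (Ht0 : t0 <= m) by (apply Hm1; auto).
      assert (m < 1) by (destruct Hm1'; [auto|contradiction]).
      unfold t0 in Ht0. unfold Rmin in Ht0. destruct (Rle_dec 1 (m + d/2)); lra.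
  - exfalso. destruct (HV _ HVm) as [r [Hr Hball]].
    destruct (Hc r Hr) as [d [Hd Hcd]].
    destruct (Req_dec m 0) as [E0|E0].
    + rewrite E0 in HVm, HS. apply (Hdis _ HS H0 HVm).
    + set (s := Rmax 0 (m - d/2)).
      assert (Hs : 0 <= s < m). { unfold s. split. apply Rmax_l. apply Rmax_lub_lt; lra. }
      assert (U (g s)) by (apply Hbelow; auto).
      assert (V (g s)). { apply Hball. unfold ball3. apply Hcd. unfold dR.
        rewrite Rabs_left1 by lra. assert (m - d/2 <= s) by apply Rmax_r. lra. }
      destruct (Hg s ltac:(lra)) as [HSs _]. apply (Hdis _ HSs H H1).
Qed.

Lemma connected_by_paths (S : set3) :
  (forall p q, S p -> S q -> exists m, PathIn S p m /\ PathIn S m q) -> connected3 S.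
Proof.
  intros Hch U V HU HV Hcov Hdis [p [Sp Up]] [q [Sq Vq]].
  destruct (Hch p q Sp Sq) as [m [[g1 [G10 [G11 G1]]] [g2 [G20 [G21 G2]]]]].
  assert (U m). { rewrite <- G11. apply (path_same_side S U V g1); auto. rewrite G10; auto. }
  assert (U q). { rewrite <- G21. apply (path_same_side S U V g2); auto. rewrite G20; auto. }
  apply (Hdis q Sq H0 Vq).
Qed.

Definition Mm (p : P3) : P3 := Om2 (Om1 (Psi p)).
Definition MI (q : P3) : P3 := PsiI (Om1I (Om2I q)).
Definition FF (p : P3) : P4 := Ffin (Mm p).
Definition GG (q : P4) : P3 := MI (Gfin q).
Definition UU (p : P3) : Prop := NZ (Mm p).
Definition Circ (q : P4) : Prop := p4c q ^ 2 + p4d q ^ 2 = 1.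

Lemma MI_M p : MI (Mm p) = p.
Proof. unfold MI, Mm. rewrite Om2_inv, Om1_inv, Psi_inv. auto. Qed.
Lemma M_MI q : Mm (MI q) = q.
Proof. unfold MI, Mm. rewrite Psi_inv', Om1_inv', Om2_inv'. auto. Qed.

Lemma A_A3 p : Aset p <-> A3 (Mm p).
Proof. unfold Mm. rewrite chain1, chain2, chain3. tauto. Qed.

Lemma A_UU p : Aset p -> UU p.
Proof. intro H. apply A_A3 in H. apply A3_NZ; auto. Qed.

Lemma GF p : UU p -> GG (FF p) = p.
Proof. intro H. unfold GG, FF. rewrite F_G by auto. apply MI_M. Qed.

Lemma Circ_unit q : Circ q -> p4c q * p4c q + p4d q * p4d q = 1.
Proof. unfold Circ. rewrite !pow2_mul. auto. Qed.

Lemma FG q : Circ q -> FF (GG q) = q.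
Proof. intro H. unfold GG, FF. rewrite M_MI. apply G_F. apply Circ_unit; auto. Qed.

Lemma M_cont p : contg dist3 dist3 Mm p.
Proof. unfold Mm. apply (contg_comp _ dist3). apply (contg_comp _ dist3). apply Psi_cont. apply Om1_cont. apply Om2_cont. Qed.
Lemma MI_cont p : contg dist3 dist3 MI p.
Proof. unfold MI. apply (contg_comp _ dist3). apply (contg_comp _ dist3). apply Om2I_cont. apply Om1I_cont. apply PsiI_cont. Qed.

Lemma FF_cont p : UU p -> contg dist3 dist4 FF p.
Proof. intro H. unfold FF. apply (contg_comp _ dist3). apply M_cont. apply Ffin_cont; auto. Qed.
Lemma GG_cont q : Circ q -> contg dist4 dist3 GG q.
Proof. intro H. unfold GG. apply (contg_comp _ dist3). apply Gfin_cont. apply unit_nz. apply Circ_unit; auto. apply MI_cont. Qed.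

Lemma FF_T p : UU p -> (solid_torus (FF p) <-> Aset p).
Proof. intro H. unfold FF. rewrite Ffin_T by auto. rewrite A_A3. tauto. Qed.

Lemma FF_circ p : UU p -> Circ (FF p).
Proof. intro H. apply Ffin_circle; auto. Qed.

Lemma Gfin_NZ q : Circ q -> NZ (Gfin q).
Proof. intro H. unfold NZ, Gfin; simpl. pose proof (unit_nz _ _ (Circ_unit q H)).
  set (r := rho ((Ea (p4a q) (p4b q) + 1) / 2) (p4c q) (p4d q)).
  assert (0 < r) by apply exp_pos.
  replace (4 + r * p4c q - 4) with (r * p4c q) by ring.
  replace (3/2 + r * p4d q - 3/2) with (r * p4d q) by ring.
  destruct H0 as [H0|H0]; [left|right]; apply Rmult_integral_contrapositive; split; lra.
Qed.

Lemma GG_UU q : Circ q -> UU (GG q).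
Proof. intro H. unfold UU, GG. rewrite M_MI. apply Gfin_NZ; auto. Qed.

Lemma T_circ q : solid_torus q -> Circ q.
Proof. intros [_ H]. exact H. Qed.

Lemma GG_A q : solid_torus q -> Aset (GG q).
Proof. intro H. pose proof (T_circ q H). apply FF_T. apply GG_UU; auto. rewrite FG; auto. Qed.

Lemma UU_open p : UU p -> exists r, 0 < r /\ forall q, dist3 p q < r -> UU q.
Proof. intro H. unfold UU, NZ in *.
  set (e := Rmax (Rabs (p3x (Mm p) - 4)) (Rabs (p3y (Mm p) - 3/2))).
  assert (He : 0 < e).
  { unfold e. destruct H as [H|H]. apply Rlt_le_trans with (Rabs (p3x (Mm p) - 4)). apply Rabs_pos_lt; auto. apply Rmax_l.
    apply Rlt_le_trans with (Rabs (p3y (Mm p) - 3/2)). apply Rabs_pos_lt; auto. apply Rmax_r. }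
  destruct (M_cont p e He) as [d [Hd Hc]]. exists d. split; auto. intros q Hq.
  specialize (Hc q Hq). pose proof (c3x (Mm p) (Mm q)). pose proof (c3y (Mm p) (Mm q)).
  destruct (Req_dec (p3x (Mm q) - 4) 0) as [E1|E1]; auto. destruct (Req_dec (p3y (Mm q) - 3/2) 0) as [E2|E2]; auto.
  exfalso. unfold e in Hc.
  replace (p3x (Mm q) - p3x (Mm p)) with (- (p3x (Mm p) - 4)) in H0 by lra.
  replace (p3y (Mm q) - p3y (Mm p)) with (- (p3y (Mm p) - 3/2)) in H1 by lra.
  rewrite Rabs_Ropp in H0, H1. unfold Rmax in Hc. destruct Rle_dec; lra.
Qed.

Theorem homeoA : homeomorphic34 Aset solid_torus.
Proof. exists FF, GG. split; [|split; [|split; [|split; [|split]]]].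
  - intros p H. apply FF_T; auto. apply A_UU; auto.
  - intros q H. apply GG_A; auto.
  - intros p H. apply GF. apply A_UU; auto.
  - intros q H. apply FG. apply T_circ; auto.
  - intros p H eps He. destruct (FF_cont p (A_UU p H) eps He) as [d [Hd Hc]]. exists d; split; auto.
  - intros q H eps He. destruct (GG_cont q (T_circ q H) eps He) as [d [Hd Hc]]. exists d; split; auto.
Qed.

Lemma abs_le1 a : a * a <= 1 -> Rabs a <= 1.
Proof. intro H. destruct (Rle_dec (Rabs a) 1); auto. exfalso.
  assert (1 * 1 < Rabs a * Rabs a) by (apply Rmult_le_0_lt_compat; lra).
  rewrite <- Rabs_mult, Rabs_right in H0 by (apply Rle_ge, Rle_0_sqr). lra. Qed.

Lemma sq_bound a e : Rabs a <= 1 -> Rabs e <= 1 -> (a + e) * (a + e) <= a * a + 3 * Rabs e.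
Proof. intros Ha He. assert (Rabs (a * e) <= Rabs e).
  { rewrite Rabs_mult. pose proof (Rabs_pos e). pose proof (Rabs_pos a).
    apply Rle_trans with (1 * Rabs e). apply Rmult_le_compat_r; auto. lra. }
  assert (e * e <= Rabs e). { rewrite <- (Rabs_right (e*e)) by (apply Rle_ge, Rle_0_sqr). rewrite Rabs_mult.
    pose proof (Rabs_pos e). apply Rle_trans with (1 * Rabs e). apply Rmult_le_compat_r; auto. lra. }
  pose proof (Rle_abs (a * e)). lra. Qed.

Lemma open_disc a b : a ^ 2 + b ^ 2 < 1 -> exists e, 0 < e /\
  forall a' b', Rabs (a' - a) < e -> Rabs (b' - b) < e -> a' ^ 2 + b' ^ 2 < 1.
Proof. intro H. rewrite !pow2_mul in H. set (m := a * a + b * b) in *.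
  exists (Rmin 1 ((1 - m) / 8)). split. apply Rmin_pos; lra.
  intros a' b' Ha Hb. rewrite !pow2_mul.
  pose proof (Rmin_l 1 ((1 - m) / 8)). pose proof (Rmin_r 1 ((1 - m) / 8)).
  pose proof (Rle_0_sqr a). pose proof (Rle_0_sqr b). unfold Rsqr in *.
  assert (Hm : m = a * a + b * b) by reflexivity. clearbody m.
  assert (Rabs a <= 1) by (apply abs_le1; lra). assert (Rabs b <= 1) by (apply abs_le1; lra).
  replace a' with (a + (a' - a)) by ring. replace b' with (b + (b' - b)) by ring.
  pose proof (sq_bound a (a' - a) H4 ltac:(lra)). pose proof (sq_bound b (b' - b) H5 ltac:(lra)). lra.
Qed.

Lemma dist3_refl p : dist3 p p = 0.
Proof. unfold dist3. replace ((p3x p - p3x p) ^ 2 + (p3y p - p3y p) ^ 2 + (p3z p - p3z p) ^ 2) with 0 by ring. apply sqrt_0. Qed.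

Lemma int_char p : interior3 Aset p <-> Aset p /\ open_solid_torus (FF p).
Proof. split.
  - intros [r [Hr Hb]]. assert (HA : Aset p) by (apply Hb; unfold ball3; rewrite dist3_refl; auto).
    split; auto. pose proof (A_UU p HA) as HU. pose proof (proj2 (FF_T p HU) HA) as [HT HC].
    split; auto. destruct (Rle_dec 1 ((p4a (FF p)) ^ 2 + (p4b (FF p)) ^ 2)) as [Hge|Hlt]; [|lra].
    exfalso. assert (Hone : (p4a (FF p)) ^ 2 + (p4b (FF p)) ^ 2 = 1) by lra.
    destruct (GG_cont (FF p) HC r Hr) as [d [Hd Hc]].
    set (et := d / 2). set (q := FF p).
    set (q' := mkP4 ((1 + et) * p4a q) ((1 + et) * p4b q) (p4c q) (p4d q)).
    assert (Hq' : Circ q') by exact HC.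
    assert (Hdist : dist4 q q' < d).
    { unfold dist4, q'; cbn [p4a p4b p4c p4d].
      replace ((p4a q - (1 + et) * p4a q) ^ 2 + (p4b q - (1 + et) * p4b q) ^ 2 + (p4c q - p4c q) ^ 2 + (p4d q - p4d q) ^ 2)
        with (et ^ 2 * ((p4a q) ^ 2 + (p4b q) ^ 2)) by ring.
      fold q in Hone. rewrite Hone, Rmult_1_r, sqrt_pow2 by (unfold et; lra). unfold et; lra. }
    specialize (Hc q' Hdist). fold q in Hc. unfold q in Hc. rewrite GF in Hc by auto.
    assert (HA' : Aset (GG q')) by (apply Hb; exact Hc).
    pose proof (proj2 (FF_T _ (A_UU _ HA')) HA') as [HT' _]. rewrite FG in HT' by auto.
    unfold q' in HT'; cbn [p4a p4b p4c p4d] in HT'. fold q in Hone.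
    replace (((1 + et) * p4a q) ^ 2 + ((1 + et) * p4b q) ^ 2) with ((1 + et)^2 * ((p4a q) ^ 2 + (p4b q) ^ 2)) in HT' by ring.
    rewrite Hone in HT'. assert (0 < et) by (unfold et; lra). simpl in HT'. nra.
  - intros [HA [Ho Hc]]. pose proof (A_UU p HA) as HU.
    destruct (UU_open p HU) as [r1 [Hr1 HU1]].
    destruct (open_disc _ _ Ho) as [e [He Hd]].
    destruct (FF_cont p HU e He) as [d [Hdd Hcd]].
    exists (Rmin r1 d). split. apply Rmin_pos; auto.
    intros q Hq. unfold ball3 in Hq.
    assert (HUq : UU q) by (apply HU1; eapply Rlt_le_trans; [exact Hq|apply Rmin_l]).
    apply FF_T; auto. split; [|apply FF_circ; auto].
    specialize (Hcd q ltac:(eapply Rlt_le_trans; [exact Hq|apply Rmin_r])).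
    left. apply Hd.
    + eapply Rle_lt_trans; [apply c4a|exact Hcd].
    + eapply Rle_lt_trans; [apply c4b|exact Hcd].
Qed.

Theorem homeoInt : homeomorphic34 (interior3 Aset) open_solid_torus.
Proof. exists FF, GG. split; [|split; [|split; [|split; [|split]]]].
  - intros p H. apply int_char in H. tauto.
  - intros q H. apply int_char. assert (solid_torus q) by (destruct H; split; [lra|auto]).
    split. apply GG_A; auto. rewrite FG; auto. apply T_circ; auto.
  - intros p H. apply GF. apply A_UU. apply int_char in H; tauto.
  - intros q H. apply FG. destruct H; auto.
  - intros p H eps He. apply int_char in H. destruct H as [H _].
    destruct (FF_cont p (A_UU p H) eps He) as [d [Hd Hc]]. exists d; split; auto.
  - intros q H eps He. assert (Circ q) by (destruct H; auto).
    destruct (GG_cont q H0 eps He) as [d [Hd Hc]]. exists d; split; auto.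
Qed.

Definition lc (q1 q2 : P4) t := (1 - t) * p4c q1 + t * p4c q2.
Definition ld (q1 q2 : P4) t := (1 - t) * p4d q1 + t * p4d q2.
Definition seg (q1 q2 : P4) (t : R) : P4 :=
  mkP4 ((1 - t) * p4a q1 + t * p4a q2) ((1 - t) * p4b q1 + t * p4b q2)
       (lc q1 q2 t / E2 (lc q1 q2 t) (ld q1 q2 t)) (ld q1 q2 t / E2 (lc q1 q2 t) (ld q1 q2 t)).

Lemma seg_a q1 q2 t : p4a (seg q1 q2 t) = (1 - t) * p4a q1 + t * p4a q2. Proof. reflexivity. Qed.
Lemma seg_b q1 q2 t : p4b (seg q1 q2 t) = (1 - t) * p4b q1 + t * p4b q2. Proof. reflexivity. Qed.
Lemma seg_c q1 q2 t : p4c (seg q1 q2 t) = lc q1 q2 t / E2 (lc q1 q2 t) (ld q1 q2 t). Proof. reflexivity. Qed.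
Lemma seg_d q1 q2 t : p4d (seg q1 q2 t) = ld q1 q2 t / E2 (lc q1 q2 t) (ld q1 q2 t). Proof. reflexivity. Qed.

Definition kk (q1 q2 : P4) := p4c q1 * p4c q2 + p4d q1 * p4d q2.

Lemma lcd_pos q1 q2 t : Circ q1 -> Circ q2 -> kk q1 q2 > -1 -> 0 <= t <= 1 ->
  0 < lc q1 q2 t * lc q1 q2 t + ld q1 q2 t * ld q1 q2 t.
Proof. intros H1 H2 Hk Ht. apply Circ_unit in H1. apply Circ_unit in H2. unfold kk in Hk.
  assert (E : lc q1 q2 t * lc q1 q2 t + ld q1 q2 t * ld q1 q2 t = (1 - 2*t) * (1 - 2*t) + 2 * (t * (1 - t)) * (1 + kk q1 q2)).
  { unfold lc, ld, kk. replace ((1 - t) * p4c q1 + t * p4c q2) with ((1 - t) * p4c q1 + t * p4c q2) by ring.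
    transitivity ((1-t)*(1-t) * (p4c q1 * p4c q1 + p4d q1 * p4d q1) + t*t*(p4c q2 * p4c q2 + p4d q2 * p4d q2)
      + 2 * (t * (1-t)) * (p4c q1 * p4c q2 + p4d q1 * p4d q2)). ring. rewrite H1, H2. ring. }
  rewrite E. unfold kk. destruct (Req_dec t (1/2)) as [->|Hn].
  - replace (1 - 2 * (1/2)) with 0 by field. lra.
  - assert (0 < (1 - 2*t) * (1 - 2*t)). { apply Rsqr_pos_lt. intro. apply Hn. lra. }
    assert (0 <= t * (1 - t)) by (apply Rmult_le_pos; lra). assert (0 <= t * (1-t) * (1 + kk q1 q2)) by (apply Rmult_le_pos; unfold kk; lra).
    unfold kk in *. lra.
Qed.

Lemma seg_cont q1 q2 t : Circ q1 -> Circ q2 -> kk q1 q2 > -1 -> 0 <= t <= 1 -> contg dR dist4 (seg q1 q2) t.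
Proof. intros H1 H2 Hk Ht. pose proof (lcd_pos q1 q2 t H1 H2 Hk Ht).
  assert (Hn : 0 < E2 (lc q1 q2 t) (ld q1 q2 t)) by (unfold E2; apply sqrt_lt_R0; auto).
  assert (Hl : forall x y, contg dR dR (fun s => (1 - s) * x + s * y) t).
  { intros. apply cont_plus; apply cont_mult; try apply cont_const; try apply cont_idR.
    apply cont_minus. apply cont_const. apply cont_idR. }
  unfold seg. apply contV4; auto.
  - apply cont_div. apply Hl. apply cont_E2; apply Hl. lra.
  - apply cont_div. apply Hl. apply cont_E2; apply Hl. lra.
Qed.

Lemma seg_in q1 q2 t : open_solid_torus q1 -> open_solid_torus q2 -> kk q1 q2 > -1 -> 0 <= t <= 1 ->
  open_solid_torus (seg q1 q2 t).
Proof. intros [Ha1 H1] [Ha2 H2] Hk Ht. pose proof (lcd_pos q1 q2 t H1 H2 Hk Ht).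
  assert (Hn : 0 < E2 (lc q1 q2 t) (ld q1 q2 t)) by (unfold E2; apply sqrt_lt_R0; auto).
  pose proof (E2_sq (lc q1 q2 t) (ld q1 q2 t)) as Hsq.
  unfold open_solid_torus. rewrite seg_a, seg_b, seg_c, seg_d. rewrite !pow2_mul in *. split.
  - set (a1 := p4a q1) in *. set (a2 := p4a q2) in *. set (b1 := p4b q1) in *. set (b2 := p4b q2) in *.
    assert (E : ((1 - t) * a1 + t * a2) * ((1 - t) * a1 + t * a2) + ((1 - t) * b1 + t * b2) * ((1 - t) * b1 + t * b2)
      = (1 - t) * (a1 * a1 + b1 * b1) + t * (a2 * a2 + b2 * b2) - t * (1 - t) * ((a1 - a2) * (a1 - a2) + (b1 - b2) * (b1 - b2))) by ring.
    rewrite E. pose proof (Rle_0_sqr (a1 - a2)). pose proof (Rle_0_sqr (b1 - b2)). unfold Rsqr in *.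
    assert (0 <= t * (1 - t)) by (apply Rmult_le_pos; lra).
    assert (0 <= t * (1 - t) * ((a1 - a2) * (a1 - a2) + (b1 - b2) * (b1 - b2))) by (apply Rmult_le_pos; lra).
    assert ((1 - t) * (a1 * a1 + b1 * b1) <= (1 - t) * 1) by (apply Rmult_le_compat_l; lra).
    assert (t * (a2 * a2 + b2 * b2) <= t * 1) by (apply Rmult_le_compat_l; lra).
    destruct (Req_dec t 0) as [->|Ht0].
    + lra.
    + assert (t * (a2 * a2 + b2 * b2) < t * 1) by (apply Rmult_lt_compat_l; lra). lra.
  - set (n := E2 (lc q1 q2 t) (ld q1 q2 t)) in *.
    replace (lc q1 q2 t / n * (lc q1 q2 t / n) + ld q1 q2 t / n * (ld q1 q2 t / n)) with
      ((lc q1 q2 t * lc q1 q2 t + ld q1 q2 t * ld q1 q2 t) / (n * n)) by (field; lra).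
    rewrite <- Hsq. field. lra.
Qed.

Lemma seg0 q1 q2 : Circ q1 -> seg q1 q2 0 = q1.
Proof. intro H. apply Circ_unit in H. unfold seg, lc, ld.
  replace ((1 - 0) * p4c q1 + 0 * p4c q2) with (p4c q1) by ring.
  replace ((1 - 0) * p4d q1 + 0 * p4d q2) with (p4d q1) by ring.
  rewrite E2_unit by auto. destruct q1; simpl. f_equal; field. Qed.
Lemma seg1 q1 q2 : Circ q2 -> seg q1 q2 1 = q2.
Proof. intro H. apply Circ_unit in H. unfold seg, lc, ld.
  replace ((1 - 1) * p4c q1 + 1 * p4c q2) with (p4c q2) by ring.
  replace ((1 - 1) * p4d q1 + 1 * p4d q2) with (p4d q2) by ring.
  rewrite E2_unit by auto. destruct q2; simpl. f_equal; field. Qed.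

Lemma int_path q1 q2 : open_solid_torus q1 -> open_solid_torus q2 -> kk q1 q2 > -1 ->
  PathIn (interior3 Aset) (GG q1) (GG q2).
Proof. intros H1 H2 Hk. pose proof (proj2 H1) as C1. pose proof (proj2 H2) as C2.
  exists (fun t => GG (seg q1 q2 t)). split; [|split].
  - rewrite seg0; auto.
  - rewrite seg1; auto.
  - intros t Ht. pose proof (seg_in q1 q2 t H1 H2 Hk Ht) as Hs. split.
    + apply int_char. split. apply GG_A. destruct Hs; split; [lra|auto].
      rewrite FG; auto. destruct Hs; auto.
    + apply (contg_comp _ dist4). apply seg_cont; auto. apply GG_cont. destruct Hs; auto.
Qed.

Theorem int_connected : connected3 (interior3 Aset).
Proof. apply connected_by_paths. intros p1 p2 H1 H2.
  pose proof H1 as H1'. pose proof H2 as H2'.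
  apply int_char in H1'. apply int_char in H2'. destruct H1' as [A1 O1]. destruct H2' as [A2 O2].
  set (q1 := FF p1) in *. set (q2 := FF p2) in *.
  assert (E1 : GG q1 = p1) by (apply GF; apply A_UU; auto).
  assert (E2' : GG q2 = p2) by (apply GF; apply A_UU; auto).
  pose proof (Circ_unit _ (proj2 O1)) as U1. pose proof (Circ_unit _ (proj2 O2)) as U2.
  destruct (Rlt_dec (-1) (kk q1 q2)) as [Hk|Hk].
  - exists p2. split.
    + rewrite <- E1, <- E2'. apply int_path; auto.
    + rewrite <- E2'. apply int_path; auto. unfold kk. lra.
  - set (m := mkP4 (p4a q2) (p4b q2) (- p4d q1) (p4c q1)).
    assert (Om : open_solid_torus m).
    { unfold m, open_solid_torus; cbn [p4a p4b p4c p4d]. split. apply O2. rewrite !pow2_mul. lra. }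
    assert (S1 : p4c q1 + p4c q2 = 0 /\ p4d q1 + p4d q2 = 0).
    { unfold kk in Hk. pose proof (Rle_0_sqr (p4c q1 + p4c q2)). pose proof (Rle_0_sqr (p4d q1 + p4d q2)).
      unfold Rsqr in *. assert ((p4c q1 + p4c q2) * (p4c q1 + p4c q2) = 0) by lra.
      assert ((p4d q1 + p4d q2) * (p4d q1 + p4d q2) = 0) by lra.
      split; apply Rsqr_0_uniq; unfold Rsqr; auto. }
    exists (GG m). split.
    + rewrite <- E1. apply int_path; auto. unfold kk, m; cbn [p4c p4d]. lra.
    + rewrite <- E2'. apply int_path; auto. unfold kk, m; cbn [p4c p4d].
      replace (p4c q2) with (- p4c q1) by lra. replace (p4d q2) with (- p4d q1) by lra. lra.
Qed.

Lemma image_inv (f g : P3 -> P3) (S : set3) p :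
  (forall q, g (f q) = q) -> (forall q, f (g q) = q) -> (image3 f S p <-> S (g p)).
Proof. intros H1 H2. split.
  - intros [q [Hq ->]]. rewrite H1; auto.
  - intro H. exists (g p). split; [auto| rewrite H2; auto]. Qed.

Lemma dist_shift p h k l : dist3 p (mkP3 (p3x p + h) (p3y p + k) (p3z p + l)) = sqrt (h*h + k*k + l*l).
Proof. unfold dist3; simpl. f_equal. ring. Qed.

Lemma sqrt_small h k l r : 0 < r -> Rabs h < r/2 -> Rabs k < r/2 -> Rabs l < r/2 -> sqrt (h*h + k*k + l*l) < r.
Proof. intros Hr H1 H2 H3.
  assert (forall a, Rabs a < r/2 -> a * a <= r/2 * (r/2)).
  { intros a Ha. rewrite <- (Rabs_right (a*a)) by (apply Rle_ge, Rle_0_sqr). rewrite Rabs_mult.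
    apply Rmult_le_compat; try apply Rabs_pos; lra. }
  pose proof (H h H1). pose proof (H k H2). pose proof (H l H3).
  rewrite <- (sqrt_square r) by lra. apply sqrt_lt_1_alt. split.
  pose proof (Rle_0_sqr h); pose proof (Rle_0_sqr k); pose proof (Rle_0_sqr l); unfold Rsqr in *; lra.
  assert (0 < r * r) by (apply Rmult_lt_0_compat; lra). lra.
Qed.

Lemma int_inb x1 x2 y1 y2 z1 z2 p : interior3 (inb x1 x2 y1 y2 z1 z2) p ->
  x1 < p3x p < x2 /\ y1 < p3y p < y2 /\ z1 < p3z p < z2.
Proof. intros [r [Hr H]].
  assert (Hs : forall h k l, Rabs h < r/2 -> Rabs k < r/2 -> Rabs l < r/2 ->
     inb x1 x2 y1 y2 z1 z2 (mkP3 (p3x p + h) (p3y p + k) (p3z p + l))).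
  { intros. apply H. unfold ball3. rewrite dist_shift. apply sqrt_small; auto. }
  assert (Z : Rabs 0 < r/2) by (rewrite Rabs_R0; lra).
  assert (P : Rabs (r/4) < r/2) by (rewrite Rabs_right; lra).
  assert (N : Rabs (-(r/4)) < r/2) by (rewrite Rabs_Ropp, Rabs_right; lra).
  pose proof (Hs _ _ _ P Z Z) as A1. pose proof (Hs _ _ _ N Z Z) as A2.
  pose proof (Hs _ _ _ Z P Z) as A3. pose proof (Hs _ _ _ Z N Z) as A4.
  pose proof (Hs _ _ _ Z Z P) as A5. pose proof (Hs _ _ _ Z Z N) as A6.
  unfold inb in *; simpl in *. repeat split; lra.
Qed.

Lemma int_mono (S S' : set3) p : interior3 S p -> (forall q, S q -> S' q) -> interior3 S' p.
Proof. intros [r [Hr H]] Hs. exists r. split; auto. Qed.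

Lemma int_pull (f g : P3 -> P3) (S : set3) p : isometry3 f -> (forall q, f (g q) = q) ->
  (forall q, g (f q) = q) -> interior3 (fun q => S (g q)) p -> interior3 S (g p).
Proof. intros Hf H1 H2 [r [Hr H]]. exists r. split; auto. intros q Hq. unfold ball3 in *.
  rewrite <- (H2 q). apply H. rewrite <- (H1 p) at 1. rewrite Hf. auto. Qed.

Lemma avoid (l : list R) x e : 0 < e -> exists t, 0 < t < e /\ List.Forall (fun a => x + t <> a) l.
Proof. revert e. induction l as [|a l IH]; intros e He.
  - exists (e/2). split; [lra|constructor].
  - destruct (IH e He) as [t [Ht Hf]].
    destruct (Req_dec (x + t) a) as [E|E].
    + destruct (IH t ltac:(lra)) as [t' [Ht' Hf']]. exists t'. split; [lra|]. constructor; auto. lra.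
    + exists t. split; auto.
Qed.

Definition Rm (p : P3) : P3 := mkP3 (p3x p) (4 - p3y p) (2 - p3z p).
Lemma Rm_inv p : Rm (Rm p) = p.
Proof. unfold Rm; destruct p; simpl; f_equal; ring. Qed.

Lemma isoE (f : P3 -> P3) : (forall p q, (p3x (f p) - p3x (f q))^2 + (p3y (f p) - p3y (f q))^2 + (p3z (f p) - p3z (f q))^2
  = (p3x p - p3x q)^2 + (p3y p - p3y q)^2 + (p3z p - p3z q)^2) -> isometry3 f.
Proof. intros H p q. unfold dist3. rewrite H. auto. Qed.

Lemma Rm_iso : isometry3 Rm.
Proof. apply isoE. intros; simpl; ring. Qed.

Definition box842 := inb 0 8 0 4 0 2.

Ltac bcases := repeat match goal with
  | H : _ \/ _ |- _ => destruct H
  | H : _ /\ _ |- _ => destruct H end.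

Lemma boxAR p : box842 p <-> Aset p \/ Aset (Rm p).
Proof. unfold box842, Aset, inb, Rm; destruct p as [x y z]; simpl. split.
  - intros [[H1 H2] [[H3 H4] [H5 H6]]].
    destruct (Rle_dec x 2).
    + destruct (Rle_dec z 1). left; left; lra. right; left; lra.
    + destruct (Rle_dec 6 x).
      * destruct (Rle_dec z 1). left; right; right; right; lra. right; right; right; right; lra.
      * destruct (Rle_dec y 1). left; right; left; lra.
        destruct (Rle_dec y 2). right; right; right; left; lra.
        destruct (Rle_dec y 3). left; right; right; left; lra.
        right; right; left; lra.
  - intros H. bcases; lra.
Qed.

Definition Eplane (p : P3) : Prop :=
  p3x p = 2 \/ p3x p = 6 \/ p3y p = 1 \/ p3y p = 2 \/ p3y p = 3 \/ p3z p = 1.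

Lemma AR_plane p : Aset p -> Aset (Rm p) -> Eplane p.
Proof. unfold Aset, Eplane, inb, Rm; destruct p as [x y z]; simpl. intros H1 H2.
  destruct H1 as [H1|[H1|[H1|H1]]]; destruct H2 as [H2|[H2|[H2|H2]]];
  first [ left; lra | right; left; lra | right; right; left; lra | right; right; right; left; lra
        | right; right; right; right; left; lra | right; right; right; right; right; lra ].
Qed.

Lemma AR_disj p : interior3 Aset p -> interior3 (fun q => Aset (Rm q)) p -> False.
Proof. intros [r1 [Hr1 H1]] [r2 [Hr2 H2]].
  set (r := Rmin r1 r2). assert (Hr : 0 < r) by (apply Rmin_pos; auto).
  destruct (avoid (2 :: 6 :: nil) (p3x p) (r/2) ltac:(lra)) as [t1 [Ht1 F1]].
  destruct (avoid (1 :: 2 :: 3 :: nil) (p3y p) (r/2) ltac:(lra)) as [t2 [Ht2 F2]].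
  destruct (avoid (1 :: nil) (p3z p) (r/2) ltac:(lra)) as [t3 [Ht3 F3]].
  set (q := mkP3 (p3x p + t1) (p3y p + t2) (p3z p + t3)).
  assert (Hd : dist3 p q < r).
  { unfold q. rewrite dist_shift. apply sqrt_small; auto; rewrite Rabs_right; lra. }
  assert (Aset q) by (apply H1; unfold ball3; eapply Rlt_le_trans; [exact Hd|apply Rmin_l]).
  assert (Aset (Rm q)) by (apply (H2 q); unfold ball3; eapply Rlt_le_trans; [exact Hd|apply Rmin_r]).
  pose proof (AR_plane q H H0) as E. unfold Eplane, q in E; simpl in E.
  pose proof (List.Forall_inv F1) as X1. pose proof (List.Forall_inv (List.Forall_inv_tail F1)) as X2.
  pose proof (List.Forall_inv F2) as Y1. pose proof (List.Forall_inv (List.Forall_inv_tail F2)) as Y2.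
  pose proof (List.Forall_inv (List.Forall_inv_tail (List.Forall_inv_tail F2))) as Y3.
  pose proof (List.Forall_inv F3) as Z1. simpl in *. tauto.
Qed.

Lemma inb_closed x1 x2 y1 y2 z1 z2 p : ~ inb x1 x2 y1 y2 z1 z2 p ->
  exists r, 0 < r /\ forall q, dist3 p q < r -> ~ inb x1 x2 y1 y2 z1 z2 q.
Proof. intro H. unfold inb in *.
  pose proof (c3x p). pose proof (c3y p). pose proof (c3z p).
  destruct (Rlt_dec (p3x p) x1). exists (x1 - p3x p). split; [lra|]. intros q Hq [[A _] _]. specialize (H0 q). unfold Rabs in H0; destruct Rcase_abs in H0; lra.
  destruct (Rlt_dec x2 (p3x p)). exists (p3x p - x2). split; [lra|]. intros q Hq [[_ A] _]. specialize (H0 q). unfold Rabs in H0; destruct Rcase_abs in H0; lra.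
  destruct (Rlt_dec (p3y p) y1). exists (y1 - p3y p). split; [lra|]. intros q Hq [_ [[A _] _]]. specialize (H1 q). unfold Rabs in H1; destruct Rcase_abs in H1; lra.
  destruct (Rlt_dec y2 (p3y p)). exists (p3y p - y2). split; [lra|]. intros q Hq [_ [[_ A] _]]. specialize (H1 q). unfold Rabs in H1; destruct Rcase_abs in H1; lra.
  destruct (Rlt_dec (p3z p) z1). exists (z1 - p3z p). split; [lra|]. intros q Hq [_ [_ [A _]]]. specialize (H2 q). unfold Rabs in H2; destruct Rcase_abs in H2; lra.
  destruct (Rlt_dec z2 (p3z p)). exists (p3z p - z2). split; [lra|]. intros q Hq [_ [_ [_ A]]]. specialize (H2 q). unfold Rabs in H2; destruct Rcase_abs in H2; lra.
  exfalso. apply H. repeat split; lra.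
Qed.

Lemma A_closed : closed3 Aset.
Proof. unfold closed3, open3. intros p Hp. unfold Aset in Hp.
  destruct (inb_closed 0 2 0 4 0 1 p ltac:(tauto)) as [r1 [H1 K1]].
  destruct (inb_closed 2 6 0 1 0 2 p ltac:(tauto)) as [r2 [H2 K2]].
  destruct (inb_closed 2 6 2 3 0 2 p ltac:(tauto)) as [r3 [H3 K3]].
  destruct (inb_closed 6 8 0 4 0 1 p ltac:(tauto)) as [r4 [H4 K4]].
  exists (Rmin (Rmin r1 r2) (Rmin r3 r4)). split. repeat apply Rmin_pos; auto.
  intros q Hq. unfold ball3 in Hq.
  pose proof (Rmin_l (Rmin r1 r2) (Rmin r3 r4)). pose proof (Rmin_r (Rmin r1 r2) (Rmin r3 r4)).
  pose proof (Rmin_l r1 r2). pose proof (Rmin_r r1 r2). pose proof (Rmin_l r3 r4). pose proof (Rmin_r r3 r4).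
  unfold Aset. intros [A|[A|[A|A]]].
  apply (K1 q); auto; lra. apply (K2 q); auto; lra. apply (K3 q); auto; lra. apply (K4 q); auto; lra.
Qed.

Lemma A_bounded : bounded3 Aset.
Proof. exists 10. intros p H. unfold dist3. rewrite <- (sqrt_square 10) by lra. apply sqrt_le_1_alt.
  unfold Aset, inb in H. destruct p as [x y z]; simpl in *.
  assert (0 <= x <= 8 /\ 0 <= y <= 4 /\ 0 <= z <= 2) by (bcases; lra).
  destruct H0 as [[X1 X2] [[Y1 Y2] [Z1 Z2]]].
  assert (x * x <= 8 * 8) by (apply Rmult_le_compat; lra).
  assert (y * y <= 4 * 4) by (apply Rmult_le_compat; lra).
  assert (z * z <= 2 * 2) by (apply Rmult_le_compat; lra).
  replace ((0 - x) ^ 2 + (0 - y) ^ 2 + (0 - z) ^ 2) with (x*x + y*y + z*z) by ring. lra.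
Qed.

Lemma A_int_ne : exists p, interior3 Aset p.
Proof. exists (mkP3 1 1 (1/2)). exists (1/4). split; [lra|]. intros q Hq. unfold ball3 in Hq.
  pose proof (c3x (mkP3 1 1 (1/2)) q). pose proof (c3y (mkP3 1 1 (1/2)) q). pose proof (c3z (mkP3 1 1 (1/2)) q).
  simpl in *. left. unfold inb. unfold Rabs in *. repeat destruct Rcase_abs; repeat split; lra.
Qed.

Definition s1 (p : P3) := mkP3 (p3y p) (p3x p) (p3z p).
Definition s2 (p : P3) := mkP3 (p3x p + 4) (p3z p) (p3y p).
Definition s2i (p : P3) := mkP3 (p3x p - 4) (p3z p) (p3y p).
Definition s3 (p : P3) := mkP3 (p3x p + 4) (p3z p + 4) (p3y p).
Definition s3i (p : P3) := mkP3 (p3x p - 4) (p3z p) (p3y p - 4).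
Definition s4 (p : P3) := mkP3 (p3y p + 12) (p3x p) (p3z p).
Definition s4i (p : P3) := mkP3 (p3y p) (p3x p - 12) (p3z p).

Ltac invp := intros [? ? ?]; unfold s1, s2, s2i, s3, s3i, s4, s4i, Rm; simpl; f_equal; ring.
Lemma s1_inv : forall p, s1 (s1 p) = p. Proof. invp. Qed.
Lemma s2_inv : forall p, s2i (s2 p) = p. Proof. invp. Qed.
Lemma s2_inv' : forall p, s2 (s2i p) = p. Proof. invp. Qed.
Lemma s3_inv : forall p, s3i (s3 p) = p. Proof. invp. Qed.
Lemma s3_inv' : forall p, s3 (s3i p) = p. Proof. invp. Qed.
Lemma s4_inv : forall p, s4i (s4 p) = p. Proof. invp. Qed.
Lemma s4_inv' : forall p, s4 (s4i p) = p. Proof. invp. Qed.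

Lemma s1_iso : isometry3 s1. Proof. apply isoE. intros; simpl; ring. Qed.
Lemma s2_iso : isometry3 s2. Proof. apply isoE. intros; simpl; ring. Qed.
Lemma s3_iso : isometry3 s3. Proof. apply isoE. intros; simpl; ring. Qed.
Lemma s4_iso : isometry3 s4. Proof. apply isoE. intros; simpl; ring. Qed.

Lemma iso_comp f g : isometry3 f -> isometry3 g -> isometry3 (fun p => f (g p)).
Proof. intros Hf Hg p q. rewrite Hf, Hg. auto. Qed.

Definition fi (i : nat) : P3 -> P3 :=
  match i with
  | 0%nat => s1 | 1%nat => fun p => s1 (Rm p)
  | 2%nat => s2 | 3%nat => fun p => s2 (Rm p)
  | 4%nat => s3 | 5%nat => fun p => s3 (Rm p)
  | 6%nat => s4 | _ => fun p => s4 (Rm p) end.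

Lemma fi_iso i : isometry3 (fi i).
Proof. destruct i as [|[|[|[|[|[|[|]]]]]]]; simpl;
  first [apply s1_iso | apply s2_iso | apply s3_iso | apply s4_iso | apply iso_comp; auto using s1_iso, s2_iso, s3_iso, s4_iso, Rm_iso]. Qed.

Definition K1 := inb 0 4 0 8 0 2.
Definition K2 := inb 4 12 0 2 0 4.
Definition K3 := inb 4 12 4 6 0 4.
Definition K4 := inb 12 16 0 8 0 2.

Lemma K1_box p : K1 p <-> box842 (s1 p). Proof. unfold K1, box842, inb, s1; simpl; tauto. Qed.
Lemma K2_box p : K2 p <-> box842 (s2i p). Proof. unfold K2, box842, inb, s2i; simpl; split; intros; repeat split; lra. Qed.
Lemma K3_box p : K3 p <-> box842 (s3i p). Proof. unfold K3, box842, inb, s3i; simpl; split; intros; repeat split; lra. Qed.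
Lemma K4_box p : K4 p <-> box842 (s4i p). Proof. unfold K4, box842, inb, s4i; simpl; split; intros; repeat split; lra. Qed.

Definition half (p : P3) := mkP3 (/2 * p3x p) (/2 * p3y p) (/2 * p3z p).
Lemma scale_iff p : scale3 2 Aset p <-> Aset (half p).
Proof. split.
  - intros [q [Hq ->]]. unfold half; simpl. replace (/2 * (2 * p3x q)) with (p3x q) by field.
    replace (/2 * (2 * p3y q)) with (p3y q) by field. replace (/2 * (2 * p3z q)) with (p3z q) by field.
    destruct q; auto.
  - intro H. exists (half p). split; auto. unfold half; destruct p; simpl; f_equal; field. Qed.

Lemma half_K p : Aset (half p) <-> K1 p \/ K2 p \/ K3 p \/ K4 p.
Proof. unfold Aset, K1, K2, K3, K4, inb, half; destruct p as [x y z]; simpl. split; intro H; bcases; lra. Qed.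

Lemma img_s1 S p : image3 s1 S p <-> S (s1 p). Proof. apply image_inv; apply s1_inv. Qed.
Lemma img_s2 S p : image3 s2 S p <-> S (s2i p). Proof. apply image_inv. apply s2_inv. apply s2_inv'. Qed.
Lemma img_s3 S p : image3 s3 S p <-> S (s3i p). Proof. apply image_inv. apply s3_inv. apply s3_inv'. Qed.
Lemma img_s4 S p : image3 s4 S p <-> S (s4i p). Proof. apply image_inv. apply s4_inv. apply s4_inv'. Qed.
Lemma img_sR (s si : P3 -> P3) S p : (forall q, si (s q) = q) -> (forall q, s (si q) = q) ->
  (image3 (fun q => s (Rm q)) S p <-> S (Rm (si p))).
Proof. intros H1 H2. apply (image_inv (fun q => s (Rm q)) (fun q => Rm (si q))); intro q; [rewrite H1, Rm_inv | rewrite Rm_inv, H2]; auto. Qed.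

Lemma union8 : set_eq3 (scale3 2 Aset) (fun p => exists i, (i < 8)%nat /\ image3 (fi i) Aset p).
Proof. intro p. rewrite scale_iff, half_K. split.
  - intros [H|[H|[H|H]]].
    + apply K1_box, boxAR in H. destruct H; [exists 0%nat|exists 1%nat]; split; try lia; simpl.
      apply img_s1; auto. apply (img_sR s1 s1); auto using s1_inv.
    + apply K2_box, boxAR in H. destruct H; [exists 2%nat|exists 3%nat]; split; try lia; simpl.
      apply img_s2; auto. apply (img_sR s2 s2i); auto using s2_inv, s2_inv'.
    + apply K3_box, boxAR in H. destruct H; [exists 4%nat|exists 5%nat]; split; try lia; simpl.
      apply img_s3; auto. apply (img_sR s3 s3i); auto using s3_inv, s3_inv'.
    + apply K4_box, boxAR in H. destruct H; [exists 6%nat|exists 7%nat]; split; try lia; simpl.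
      apply img_s4; auto. apply (img_sR s4 s4i); auto using s4_inv, s4_inv'.
  - intros [i [Hi H]]. destruct i as [|[|[|[|[|[|[|[|]]]]]]]]; simpl in H; try lia.
    + left. apply K1_box, boxAR. left. apply img_s1; auto.
    + left. apply K1_box, boxAR. right. apply (img_sR s1 s1) in H; auto using s1_inv.
    + right; left. apply K2_box, boxAR. left. apply img_s2; auto.
    + right; left. apply K2_box, boxAR. right. apply (img_sR s2 s2i) in H; auto using s2_inv, s2_inv'.
    + right; right; left. apply K3_box, boxAR. left. apply img_s3; auto.
    + right; right; left. apply K3_box, boxAR. right. apply (img_sR s3 s3i) in H; auto using s3_inv, s3_inv'.
    + right; right; right. apply K4_box, boxAR. left. apply img_s4; auto.
    + right; right; right. apply K4_box, boxAR. right. apply (img_sR s4 s4i) in H; auto using s4_inv, s4_inv'.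
Qed.

Definition Kof (i : nat) : set3 :=
  match i with 0%nat | 1%nat => K1 | 2%nat | 3%nat => K2 | 4%nat | 5%nat => K3 | _ => K4 end.

Lemma img_K i p : (i < 8)%nat -> image3 (fi i) Aset p -> Kof i p.
Proof. intros Hi H. assert (scale3 2 Aset p) by (apply union8; exists i; auto).
  destruct i as [|[|[|[|[|[|[|[|]]]]]]]]; simpl in *; try lia.
  - apply K1_box, boxAR. left. apply img_s1; auto.
  - apply K1_box, boxAR. right. apply (img_sR s1 s1) in H; auto using s1_inv.
  - apply K2_box, boxAR. left. apply img_s2; auto.
  - apply K2_box, boxAR. right. apply (img_sR s2 s2i) in H; auto using s2_inv, s2_inv'.
  - apply K3_box, boxAR. left. apply img_s3; auto.
  - apply K3_box, boxAR. right. apply (img_sR s3 s3i) in H; auto using s3_inv, s3_inv'.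
  - apply K4_box, boxAR. left. apply img_s4; auto.
  - apply K4_box, boxAR. right. apply (img_sR s4 s4i) in H; auto using s4_inv, s4_inv'.
Qed.

Lemma pair_disj (s si : P3 -> P3) p : isometry3 s -> (forall q, si (s q) = q) -> (forall q, s (si q) = q) ->
  interior3 (image3 s Aset) p -> interior3 (image3 (fun q => s (Rm q)) Aset) p -> False.
Proof. intros Hs H1 H2 I1 I2.
  assert (J1 : interior3 Aset (si p)).
  { apply (int_pull s si Aset p); auto. apply (int_mono _ _ _ I1). intros q [q' [Hq ->]]. rewrite H1; auto. }
  assert (J2 : interior3 (fun q => Aset (Rm q)) (si p)).
  { apply (int_pull s si (fun q => Aset (Rm q)) p); auto. apply (int_mono _ _ _ I2).
    intros q Hq. apply (img_sR s si) in Hq; auto. }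
  apply (AR_disj _ J1 J2).
Qed.

Lemma copies_disj i j p : (i < 8)%nat -> (j < 8)%nat -> i <> j ->
  interior3 (image3 (fi i) Aset) p -> interior3 (image3 (fi j) Aset) p -> False.
Proof. intros Hi Hj Hij I1 I2.
  assert (L1 := int_mono _ _ _ I1 (fun q => img_K i q Hi)).
  assert (L2 := int_mono _ _ _ I2 (fun q => img_K j q Hj)).
  destruct i as [|[|[|[|[|[|[|[|]]]]]]]]; try lia; destruct j as [|[|[|[|[|[|[|[|]]]]]]]]; try lia;
  simpl in L1, L2; unfold K1, K2, K3, K4 in L1, L2;
  try (apply int_inb in L1; apply int_inb in L2; lra);
  simpl in I1, I2;
  first [ solve [apply (pair_disj s1 s1 p s1_iso s1_inv s1_inv); auto]
        | solve [apply (pair_disj s2 s2i p s2_iso s2_inv s2_inv'); auto]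
        | solve [apply (pair_disj s3 s3i p s3_iso s3_inv s3_inv'); auto]
        | solve [apply (pair_disj s4 s4i p s4_iso s4_inv s4_inv'); auto] ].
Qed.

Definition b2 (p : P3) := mkP3 (p3x p + 2) (p3z p) (p3y p).
Definition b2i (p : P3) := mkP3 (p3x p - 2) (p3z p) (p3y p).
Definition b3 (p : P3) := mkP3 (p3x p + 2) (p3z p + 2) (p3y p).
Definition b3i (p : P3) := mkP3 (p3x p - 2) (p3z p) (p3y p - 2).
Definition b4 (p : P3) := mkP3 (p3y p + 6) (p3x p) (p3z p).
Definition b4i (p : P3) := mkP3 (p3y p) (p3x p - 6) (p3z p).

Definition Bi (i : nat) : set3 :=
  match i with 0%nat => inb 0 2 0 4 0 1 | 1%nat => inb 2 6 0 1 0 2 | 2%nat => inb 2 6 2 3 0 2 | _ => inb 6 8 0 4 0 1 end.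

Ltac invq := intros [? ? ?]; unfold b2, b2i, b3, b3i, b4, b4i; simpl; f_equal; ring.

Lemma Bi_cong i : (i < 4)%nat -> congruent3 (box 4 2 1) (Bi i).
Proof. intro Hi. destruct i as [|[|[|[|]]]]; try lia; simpl.
  - exists s1. split. apply s1_iso. intro p. rewrite img_s1. unfold box, inb, s1; simpl; tauto.
  - exists b2. split. apply isoE; intros; simpl; ring. intro p.
    rewrite (image_inv b2 b2i) by invq. unfold box, inb, b2i; simpl. split; intros; repeat split; lra.
  - exists b3. split. apply isoE; intros; simpl; ring. intro p.
    rewrite (image_inv b3 b3i) by invq. unfold box, inb, b3i; simpl. split; intros; repeat split; lra.
  - exists b4. split. apply isoE; intros; simpl; ring. intro p.
    rewrite (image_inv b4 b4i) by invq. unfold box, inb, b4i; simpl. split; intros; repeat split; lra.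
Qed.

Lemma Bi_disj i j : (i < 4)%nat -> (j < 4)%nat -> i <> j ->
  forall p, interior3 (Bi i) p -> interior3 (Bi j) p -> False.
Proof. intros Hi Hj Hij p I1 I2.
  destruct i as [|[|[|[|]]]]; try lia; destruct j as [|[|[|[|]]]]; try lia; simpl in I1, I2;
  apply int_inb in I1; apply int_inb in I2; lra.
Qed.

Lemma Bi_union : set_eq3 Aset (fun p => exists i, (i < 4)%nat /\ Bi i p).
Proof. intro p. unfold Aset. split.
  - intros [H|[H|[H|H]]]; [exists 0%nat|exists 1%nat|exists 2%nat|exists 3%nat]; split; auto; lia.
  - intros [i [Hi H]]. destruct i as [|[|[|[|]]]]; try lia; simpl in H; tauto.
Qed.

Lemma ht_Rm p : half_turn (mkP3 4 2 1) (mkP3 1 0 0) p = Rm p.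
Proof. unfold half_turn, Rm; destruct p; simpl; f_equal; ring. Qed.

Lemma halfturn_box : congruent3 (box 8 4 2) (fun p => Aset p \/ image3 (half_turn (mkP3 4 2 1) (mkP3 1 0 0)) Aset p).
Proof. exists (fun p => p). split. intros p q; auto. intro p.
  assert (E : image3 (half_turn (mkP3 4 2 1) (mkP3 1 0 0)) Aset p <-> Aset (Rm p)).
  { apply (image_inv (half_turn (mkP3 4 2 1) (mkP3 1 0 0)) Rm); intro q; rewrite ht_Rm, Rm_inv; auto. }
  rewrite E, <- boxAR. unfold box842, inb, image3, box. split.
  - intro H. exists p. tauto.
  - intros [q [Hq Hpq]]. subst. tauto.
Qed.

Lemma dist3_scale p q : dist3 (mkP3 (2 * p3x p) (2 * p3y p) (2 * p3z p)) (mkP3 (2 * p3x q) (2 * p3y q) (2 * p3z q)) = 2 * dist3 p q.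
Proof. unfold dist3; cbn [p3x p3y p3z].
  replace ((2 * p3x p - 2 * p3x q) ^ 2 + (2 * p3y p - 2 * p3y q) ^ 2 + (2 * p3z p - 2 * p3z q) ^ 2)
    with (2 ^ 2 * ((p3x p - p3x q) ^ 2 + (p3y p - p3y q) ^ 2 + (p3z p - p3z q) ^ 2)) by ring.
  rewrite sqrt_mult_alt by (simpl; lra). rewrite sqrt_pow2 by lra. auto. Qed.

Lemma rep8 : rep_tile 8 Aset.
Proof. split; [apply A_closed|]. split; [apply A_bounded|]. split; [apply A_int_ne|].
  exists (fun j => image3 (fi j) Aset). split; [|split].
  - intros j Hj. exists (fi j). split. apply fi_iso. intro p. tauto.
  - intros j k Hj Hk Hjk p I1 I2. apply (copies_disj j k p); auto.
  - exists (fun q => mkP3 (2 * p3x q) (2 * p3y q) (2 * p3z q)). split.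
    + exists 2. split; [lra|]. apply dist3_scale.
    + intro p. split; intro H.
      * exact (proj2 (union8 p) H).
      * exact (proj1 (union8 p) H).
Qed.

Theorem mainTheorem2 :
  exists A : set3,
    rep_tile 8 A /\
    homeomorphic34 A solid_torus /\
    connected3 (interior3 A) /\
    homeomorphic34 (interior3 A) open_solid_torus /\
    (exists Bi : nat -> set3,
        (forall i, (i < 4)%nat -> congruent3 (box 4 2 1) (Bi i)) /\
        (forall i j, (i < 4)%nat -> (j < 4)%nat -> i <> j ->
           forall p, interior3 (Bi i) p -> interior3 (Bi j) p -> False) /\
        set_eq3 A (fun p => exists i, (i < 4)%nat /\ Bi i p)) /\
    (exists c u : P3, unit3 u /\
        congruent3 (box 8 4 2) (fun p => A p \/ image3 (half_turn c u) A p)) /\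
    (exists fi : nat -> (P3 -> P3),
        (forall i, (i < 8)%nat -> isometry3 (fi i)) /\
        (forall i j, (i < 8)%nat -> (j < 8)%nat -> i <> j ->
           forall p, interior3 (image3 (fi i) A) p ->
                     interior3 (image3 (fi j) A) p -> False) /\
        set_eq3 (scale3 2 A)
          (fun p => exists i, (i < 8)%nat /\ image3 (fi i) A p)).
Proof.
  exists Aset. split; [apply rep8|]. split; [apply homeoA|]. split; [apply int_connected|].
  split; [apply homeoInt|]. split.
  - exists Bi. split; [apply Bi_cong|]. split; [apply Bi_disj|apply Bi_union].
  - split.
    + exists (mkP3 4 2 1), (mkP3 1 0 0). split. unfold unit3; simpl; ring. apply halfturn_box.
    + exists fi. split; [intros; apply fi_iso|]. split.
      * intros i j Hi Hj Hij p I1 I2. apply (copies_disj i j p); auto.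
      * apply union8.
Qed.
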